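(* For all complex $q$ with $|q|<1$, \[ \sum_{i,j\geq 0} \frac{q^{4i^2+4ij+2j^2}}{(q;q)_{2i}(q^2;q^2)_j} =\frac{(-q^5,-q^7,q^{12};q^{12})_\infty}{(q^2;q^2)_\infty}, \qquad \sum_{i,j\geq 0} \frac{q^{4i^2+4ij+2j^2+4i+2j}}{(q;q)_{2i+1}(q^2;q^2)_j}=\frac{(-q,-q^{11},q^{12};q^{12})_\infty}{(q^2;q^2)_\infty}. \]
   Context: For $|q|<1$ and $n\in\mathbb{Z}_{\geq0}\cup\{\infty\}$: $(a;q)_0=1$, $(a;q)_n=\prod_{k=0}^{n-1}(1-aq^k)$, $(a;q)_\infty=\prod_{k\geq0}(1-aq^k)$, and $(a_1,\dots,a_m;q)_n=(a_1;q)_n\cdots(a_m;q)_n$. *)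

(* Defs.v *)
From Stdlib Require Import Reals.
From Coquelicot Require Import Coquelicot.
Open Scope C_scope.

Fixpoint qpoch (a q : C) (n : nat) : C :=
  match n with
  | O => 1
  | S m => qpoch a q m * (1 - a * q ^ m)
  end.

Definition is_qpoch_inf (a q P : C) : Prop :=
  filterlim (fun n => qpoch a q n) eventually (locally P).

Definition is_seriesC (u : nat -> C) (l : C) : Prop :=
  @is_series C_AbsRing C_NormedModule u l.

(* double series sum_{i,j>=0} a i j = l, read as an absolutely convergent
   double series, computed as the iterated sum  sum_i (sum_j a i j). *)
Definition is_double_seriesC (a : nat -> nat -> C) (l : C) : Prop :=
  exists s : nat -> C,
    (forall i, is_seriesC (fun j => a i j) (s i)) /\ is_seriesC s l
    /\ (exists t : nat -> R,
          (forall i, is_series (fun j => Cmod (a i j)) (t i)) /\ ex_series t).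

(* Main.v *)
Require Import Defs.
From Stdlib Require Import Reals Lia Lra Psatz Arith ClassicalEpsilon.
From Coquelicot Require Import Coquelicot.
Open Scope C_scope.

Fixpoint csum (f : nat -> C) (n : nat) : C :=
  match n with O => 0 | S m => csum f m + f m end.

Lemma csum_ext f g n : (forall k, (k < n)%nat -> f k = g k) -> csum f n = csum g n.
Proof.
  induction n; intros H; simpl; auto.
  rewrite IHn by (intros; apply H; lia). rewrite H by lia. auto.
Qed.

Lemma csum_plus f g n : csum (fun k => f k + g k) n = csum f n + csum g n.
Proof. induction n; simpl. ring. rewrite IHn. ring. Qed.

Lemma csum_mult_l c f n : csum (fun k => c * f k) n = c * csum f n.
Proof. induction n; simpl. ring. rewrite IHn. ring. Qed.

Lemma csum_shift f n : csum f (S n) = f 0%nat + csum (fun k => f (S k)) n.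
Proof. induction n. simpl. ring. change (csum f (S (S n)) = f 0%nat + (csum (fun k => f (S k)) n + f (S n))).
  simpl in *. rewrite IHn. ring. Qed.

Lemma csum_zero (f : nat -> C) n : (forall k, (k < n)%nat -> f k = 0) -> csum f n = 0.
Proof. induction n; intros H; simpl; auto.
  rewrite IHn by (intros; apply H; lia). rewrite H by lia. ring. Qed.

Lemma csum0 f : csum f 0 = 0.
Proof. reflexivity. Qed.

Lemma csum_last f n : csum f (S n) = csum f n + f n.
Proof. reflexivity. Qed.

Lemma csum_swap_tri (F : nat -> nat -> C) n :
  csum (fun k => csum (fun r => F k r) (S k)) (S n) =
  csum (fun r => csum (fun m => F (r + m)%nat r) (S (n - r))) (S n).
Proof.
  induction n.
  - simpl. ring.
  - rewrite csum_last, IHn.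
    rewrite (csum_last (fun r => csum (fun m => F (r + m)%nat r) (S (S n - r))) (S n)).
    rewrite (csum_ext (fun r => csum (fun m => F (r + m)%nat r) (S (S n - r)))
               (fun r => csum (fun m => F (r + m)%nat r) (S (n - r)) + F (S n) r) (S n)).
    + rewrite csum_plus. replace (S n - S n)%nat with 0%nat by lia.
      rewrite (csum_last _ 0). rewrite csum0. replace (S n + 0)%nat with (S n) by lia.
      rewrite (csum_last (fun r => F (S n) r) (S n)).
      change (csum (fun r : nat => F (S n) r) (S n)) with (csum (F (S n)) (S n)). ring.
    + intros k Hk. replace (S n - k)%nat with (S (n - k)) by lia.
      rewrite csum_last. f_equal. f_equal. lia.
Qed.

Lemma csum_fold_even f n :
  csum f (S (2 * n)) = f n + csum (fun r => f (n + S r)%nat + f (n - S r)%nat) n.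
Proof.
  revert f; induction n; intros f.
  - simpl. ring.
  - replace (S (2 * S n)) with (S (S (S (2 * n)))) by lia.
    rewrite csum_last. rewrite csum_shift. rewrite IHn.
    rewrite (csum_last _ n). 
    rewrite (csum_ext (fun r => f (S n + S r)%nat + f (S n - S r)%nat)
          (fun r => f (S (n + S r)) + f (S (n - S r))) n).
    + replace (S (S (2 * n))) with (S n + S n)%nat by lia.
      replace (S n - S n)%nat with 0%nat by lia. simpl. ring.
    + intros k Hk. f_equal; f_equal; lia.
Qed.

Lemma csum_fold_odd f n :
  csum f (S (S (2 * n))) = csum (fun r => f (S n + r)%nat + f (n - r)%nat) (S n).
Proof.
  revert f; induction n; intros f.
  - simpl. ring.
  - replace (S (S (2 * S n))) with (S (S (S (S (2 * n))))) by lia.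
    rewrite csum_last. rewrite csum_shift. rewrite IHn.
    rewrite (csum_last _ (S n)).
    rewrite (csum_ext (fun r => f (S (S n) + r)%nat + f (S n - r)%nat)
          (fun r => f (S (S n + r)) + f (S (n - r))) (S n)).
    + replace (S (S (S (2 * n)))) with (S (S n) + S n)%nat by lia.
      replace (S n - S n)%nat with 0%nat by lia. simpl. ring.
    + intros k Hk. f_equal; f_equal; lia.
Qed.

Lemma qpoch_S a q n : qpoch a q (S n) = qpoch a q n * (1 - a * q ^ n).
Proof. reflexivity. Qed.
Lemma qpoch_0 a q : qpoch a q 0 = 1.
Proof. reflexivity. Qed.

Lemma qpoch_add a q m n : qpoch a q (m + n) = qpoch a q m * qpoch (a * q ^ m) q n.
Proof.
  induction n.
  - rewrite Nat.add_0_r. simpl. ring.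
  - rewrite Nat.add_succ_r, !qpoch_S, IHn, Cpow_add_r. ring.
Qed.

Lemma qpoch_shift a q n : qpoch a q (S n) = (1 - a) * qpoch (a * q) q n.
Proof.
  replace (S n) with (1 + n)%nat by lia. rewrite qpoch_add. simpl. f_equal. ring.
  f_equal. ring.
Qed.

Lemma Cmod_lt1_neq a : (Cmod a < 1)%R -> 1 - a <> 0.
Proof.
  intros H E. assert (a = 1) by (apply (f_equal (fun z => 1 - z)) in E;
    replace (1 - (1 - a)) with a in E by ring; rewrite E; ring).
  subst. rewrite Cmod_1 in H. lra.
Qed.

Lemma Cmod_pow_le1 q n : (Cmod q <= 1)%R -> (Cmod (q ^ n) <= 1)%R.
Proof.
  intros H. rewrite Cmod_pow. rewrite <- (pow1 n). apply pow_incr. split; auto. apply Cmod_ge_0.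
Qed.

Lemma qpoch_nz a q n : (Cmod a < 1)%R -> (Cmod q <= 1)%R -> qpoch a q n <> 0.
Proof.
  intros Ha Hq. induction n.
  - simpl. apply C1_nz.
  - rewrite qpoch_S. apply Cmult_neq_0; auto. apply Cmod_lt1_neq.
    rewrite Cmod_mult. pose proof (Cmod_pow_le1 q n Hq). pose proof (Cmod_ge_0 a).
    pose proof (Cmod_ge_0 (q ^ n)). nra.
Qed.

Lemma Cpow_split3 (Q : C) m a b : m = (a + b + 1)%nat -> Q ^ m = Q ^ a * Q ^ b * Q.
Proof. intros ->. rewrite !Cpow_add_r. simpl. ring. Qed.

Fixpoint T (m : nat) : nat := match m with O => O | S k => (T k + k)%nat end.
Lemma T_closed m : (2 * T m + m = m * m)%nat.
Proof. induction m; simpl; lia. Qed.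
Lemma T_add r m : T (r + m) = (T r + T m + r * m)%nat.
Proof. pose proof (T_closed r); pose proof (T_closed m); pose proof (T_closed (r+m)). nia. Qed.

Fixpoint pis (u s p : C) (m : nat) : C :=
  match m with O => 1 | S k => pis u s p k * (u - s * p ^ k) end.

Lemma pis_S_l u s p m : pis u s p (S m) = (u - s) * pis u (s * p) p m.
Proof.
  induction m. simpl. ring.
  change (pis u s p (S (S m))) with (pis u s p (S m) * (u - s * p ^ (S m))).
  rewrite IHm. simpl. ring.
Qed.

Lemma pis_add u s p r m : pis u s p (r + m) = pis u s p r * pis u (s * p ^ r) p m.
Proof.
  induction m.
  - rewrite Nat.add_0_r. simpl. ring.
  - rewrite Nat.add_succ_r. simpl. rewrite IHm, Cpow_add_r. ring.
Qed.

Definition qbin (Q : C) (N k : nat) : C :=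
  if (k <=? N)%nat then qpoch Q Q N / (qpoch Q Q k * qpoch Q Q (N - k)) else 0.

Section QB.
Variable Q : C.
Hypothesis HQ : (Cmod Q < 1)%R.
Let nz n : qpoch Q Q n <> 0.
Proof. apply qpoch_nz; lra. Qed.

Lemma qbin_gt N k : (N < k)%nat -> qbin Q N k = 0.
Proof. intros H. unfold qbin. destruct (Nat.leb_spec k N); auto; lia. Qed.

Lemma qbin_le N k : (k <= N)%nat -> qbin Q N k = qpoch Q Q N / (qpoch Q Q k * qpoch Q Q (N - k)).
Proof. intros H. unfold qbin. destruct (Nat.leb_spec k N); auto; lia. Qed.

Lemma qbin_0 N : qbin Q N 0 = 1.
Proof. rewrite qbin_le by lia. rewrite Nat.sub_0_r. simpl. field. apply nz. Qed.

Lemma qbin_N N : qbin Q N N = 1.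
Proof. rewrite qbin_le by lia. rewrite Nat.sub_diag. simpl. field. apply nz. Qed.

Lemma qbin_sym N k : (k <= N)%nat -> qbin Q N k = qbin Q N (N - k).
Proof. intros H. rewrite !qbin_le by lia. replace (N - (N - k))%nat with k by lia.
  field. split; apply nz. Qed.

Lemma pascal2 N k : qbin Q (S N) (S k) = qbin Q N k + Q ^ (S k) * qbin Q N (S k).
Proof.
  destruct (lt_eq_lt_dec (S k) N) as [[H|H]|H].
  - rewrite !qbin_le by lia.
    replace (S N - S k)%nat with (S (N - S k)) by lia.
    replace (N - k)%nat with (S (N - S k)) by lia.
    rewrite !qpoch_S.
    rewrite (Cpow_split3 Q N k (N - S k)) by lia.
    replace (Q ^ S k) with (Q * Q ^ k) by reflexivity.
    pose proof (nz k). pose proof (nz N). pose proof (nz (N - S k)).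
    assert (1 - Q * Q ^ k <> 0). { pose proof (nz (S k)). rewrite qpoch_S in H3.
      intro E; apply H3; rewrite E; ring. }
    assert (1 - Q * Q ^ (N - S k) <> 0). { pose proof (nz (S (N - S k))). rewrite qpoch_S in H4.
      intro E; apply H4; rewrite E; ring. }
    field. repeat split; auto.
  - subst. rewrite !qbin_N. rewrite !qbin_le by lia.
    replace (S (S k) - S k)%nat with 1%nat by lia. replace (S k - k)%nat with 1%nat by lia.
    rewrite ?Nat.sub_diag.
    rewrite !qpoch_S, !qpoch_0. simpl Cpow.
    assert (1 - Q * Q ^ k <> 0). { pose proof (nz (S k)). rewrite qpoch_S in H.
      intro E; apply H; rewrite E; ring. }
    assert (1 - Q <> 0). { pose proof (nz 1). rewrite qpoch_S in H0. simpl in H0.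
      intro E; apply H0; replace (1 - Q * 1) with (1 - Q) by ring; rewrite E; ring. }
    pose proof (nz k). field. repeat split; auto.
  - destruct (Nat.eq_dec k N).
    + subst N. rewrite !qbin_N. rewrite (qbin_gt k (S k)) by lia. ring.
    + rewrite (qbin_gt (S N) (S k)), (qbin_gt N (S k)), (qbin_gt N k) by lia. ring.
Qed.

Lemma pascal1 N k : qbin Q (S N) (S k) = qbin Q N (S k) + Q ^ (N - k) * qbin Q N k.
Proof.
  destruct (lt_eq_lt_dec (S k) N) as [[H|H]|H].
  - rewrite !qbin_le by lia.
    replace (S N - S k)%nat with (S (N - S k)) by lia.
    replace (N - k)%nat with (S (N - S k)) by lia.
    rewrite !qpoch_S.
    rewrite (Cpow_split3 Q N k (N - S k)) by lia.
    replace (Q ^ S (N - S k)) with (Q * Q ^ (N - S k)) by reflexivity.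
    pose proof (nz k). pose proof (nz N). pose proof (nz (N - S k)).
    assert (1 - Q * Q ^ k <> 0). { pose proof (nz (S k)). rewrite qpoch_S in H3.
      intro E; apply H3; rewrite E; ring. }
    assert (1 - Q * Q ^ (N - S k) <> 0). { pose proof (nz (S (N - S k))). rewrite qpoch_S in H4.
      intro E; apply H4; rewrite E; ring. }
    field. repeat split; auto.
  - subst. rewrite !qbin_N. rewrite !qbin_le by lia.
    replace (S (S k) - S k)%nat with 1%nat by lia. replace (S k - k)%nat with 1%nat by lia.
    rewrite ?Nat.sub_diag.
    rewrite !qpoch_S, !qpoch_0. simpl Cpow.
    assert (1 - Q * Q ^ k <> 0). { pose proof (nz (S k)). rewrite qpoch_S in H.
      intro E; apply H; rewrite E; ring. }
    assert (1 - Q <> 0). { pose proof (nz 1). rewrite qpoch_S in H0. simpl in H0.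
      intro E; apply H0; replace (1 - Q * 1) with (1 - Q) by ring; rewrite E; ring. }
    pose proof (nz k). field. repeat split; auto.
  - destruct (Nat.eq_dec k N).
    + subst N. rewrite !qbin_N. rewrite (qbin_gt k (S k)) by lia. rewrite Nat.sub_diag. simpl. ring.
    + rewrite (qbin_gt (S N) (S k)), (qbin_gt N (S k)), (qbin_gt N k) by lia. ring.
Qed.
End QB.

Lemma Cpow_sub_merge (p : C) m N : (m <= N)%nat -> p ^ m * p ^ (N - m) = p ^ N.
Proof. intros H. rewrite <- Cpow_add_r. f_equal. lia. Qed.

Definition vt p N τ s u m :=
  pis u s p m * (- τ) ^ m * p ^ (T m) * qbin p N m * qpoch (τ * s * p ^ m) p (N - m).

Lemma vander p (Hp : (Cmod p < 1)%R) N : forall τ s u,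
  csum (vt p N τ s u) (S N) = qpoch (τ * u) p N.
Proof.
  induction N; intros τ s u.
  - unfold vt. simpl. rewrite (qbin_0 p Hp 0). ring.
  - rewrite csum_shift.
    assert (E : forall m, (m < S N)%nat -> vt p (S N) τ s u (S m) =
       vt p N τ s u (S m) * (1 - τ * s * p ^ N) * 0 +
       (pis u s p (S m) * (- τ) ^ (S m) * p ^ (T (S m)) * qbin p N (S m) *
         qpoch (τ * s * p ^ (S m)) p (N - m)) +
       (u - s) * (- τ) * p ^ N * vt p N τ (s * p) u m).
    { intros m Hm. unfold vt. rewrite pascal1 by auto.
      replace (S N - S m)%nat with (N - m)%nat by lia.
      rewrite pis_S_l. simpl T. rewrite Cpow_add_r.
      replace (p ^ S m) with (p * p ^ m) by reflexivity.
      rewrite <- (Cpow_sub_merge p m N) by lia.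
      replace (τ * (s * p) * p ^ m) with (τ * s * (p * p ^ m)) by ring.
      simpl Cpow. ring. }
    rewrite (csum_ext _ _ (S N) E). rewrite !csum_plus.
    rewrite csum_mult_l. rewrite IHN.
    rewrite (csum_ext (fun m => vt p N τ s u (S m) * (1 - τ * s * p ^ N) * 0) (fun _ => 0))
      by (intros; ring).
    set (g := fun m => pis u s p m * (- τ) ^ m * p ^ (T m) * qbin p N m *
         qpoch (τ * s * p ^ m) p (S N - m)).
    assert (Hg : vt p (S N) τ s u 0 + csum (fun m => pis u s p (S m) * (- τ) ^ (S m) * p ^ (T (S m)) * qbin p N (S m) *
         qpoch (τ * s * p ^ (S m)) p (N - m)) (S N) = csum g (S (S N))).
    { rewrite (csum_shift g). f_equal.
      all: try (unfold vt, g; rewrite (qbin_0 p Hp), (qbin_0 p Hp); reflexivity). }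
    assert (Hg2 : csum g (S (S N)) = (1 - τ * s * p ^ N) * csum (vt p N τ s u) (S N)).
    { rewrite csum_last. unfold g at 2. rewrite (qbin_gt p N (S N)) by lia.
      rewrite <- csum_mult_l. rewrite Cmult_0_r, Cmult_0_l, Cplus_0_r.
      apply csum_ext. intros k Hk. unfold g, vt.
      replace (S N - k)%nat with (S (N - k)) by lia. rewrite qpoch_S.
      replace (τ * s * p ^ k * p ^ (N - k)) with (τ * s * p ^ N)
        by (rewrite <- (Cpow_sub_merge p k N) by lia; ring). ring. }
    rewrite IHN in Hg2.
    assert (Z : csum (fun _ : nat => 0) (S N) = 0) by (apply csum_zero; auto).
    rewrite Z.
    transitivity (csum g (S (S N)) + (u - s) * (- τ) * p ^ N * qpoch (τ * u) p N).
    + rewrite <- Hg. ring.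
    + rewrite Hg2. rewrite qpoch_S. ring.
Qed.

Section JTP.
Variable Q : C.
Hypothesis HQ : (Cmod Q < 1)%R.

Lemma rothe_rev v a :
  qpoch (- v) Q a = csum (fun k => v ^ (a - k) * Q ^ (T (a - k)) * qbin Q a k) (S a).
Proof.
  induction a.
  - simpl. rewrite (qbin_0 Q HQ). ring.
  - rewrite csum_shift.
    rewrite (csum_ext _ (fun k => v ^ (a - k) * Q ^ T (a - k) * qbin Q a k +
        v ^ (a - k) * Q ^ T (a - k) * Q ^ (S k) * qbin Q a (S k)) (S a)).
    2:{ intros k Hk. rewrite (pascal2 Q HQ). simpl Nat.sub. ring. }
    rewrite csum_plus. rewrite <- IHa.
    rewrite csum_last. rewrite (qbin_gt Q a (S a)) by lia.
    assert (H : csum (fun k => v ^ (a - k) * Q ^ T (a - k) * Q ^ S k * qbin Q a (S k)) a =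
       csum (fun k => v * Q ^ a * (v ^ (a - S k) * Q ^ T (a - S k) * qbin Q a (S k))) a).
    { apply csum_ext. intros k Hk. replace (a - k)%nat with (S (a - S k)) by lia.
      simpl T. rewrite !Cpow_add_r. simpl Cpow.
      replace (Q ^ a) with (Q ^ (a - S k) * Q ^ (S k)) by (rewrite <- Cpow_add_r; f_equal; lia).
      simpl Cpow. ring. }
    rewrite H. clear H.
    assert (R2 : qpoch (- v) Q a = v ^ a * Q ^ (T a) +
       csum (fun k => v ^ (a - S k) * Q ^ T (a - S k) * qbin Q a (S k)) a).
    { rewrite IHa at 1. rewrite csum_shift. rewrite (qbin_0 Q HQ). rewrite Nat.sub_0_r. ring. }
    rewrite csum_mult_l.
    replace (csum (fun k => v ^ (a - S k) * Q ^ T (a - S k) * qbin Q a (S k)) a)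
      with (qpoch (- v) Q a - v ^ a * Q ^ (T a)) by (rewrite R2; ring).
    rewrite qpoch_S. rewrite (qbin_0 Q HQ). rewrite Nat.sub_0_r. simpl T.
    replace (v ^ S a) with (v * v ^ a) by reflexivity. rewrite Cpow_add_r. ring.
Qed.

Definition jc (v w : C) (a k : nat) : C :=
  if (a <=? k)%nat then w ^ (k - a) * Q ^ (T (k - a)) else v ^ (a - k) * Q ^ (T (a - k)).

Lemma jc_step v w a b k : v * w = Q -> (k <= a + b)%nat ->
  jc v w a (S k) * Q ^ (a + b - k) = jc v w a k * (w * Q ^ b).
Proof.
  intros Hvw Hk. unfold jc.
  destruct (Nat.leb_spec a k).
  - destruct (Nat.leb_spec a (S k)); [|lia].
    replace (S k - a)%nat with (S (k - a)) by lia. simpl T. rewrite !Cpow_add_r.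
    replace (a + b - k)%nat with (b - (k - a))%nat by lia.
    rewrite <- (Cpow_sub_merge Q (k - a) b) by lia. simpl Cpow. ring.
  - destruct (Nat.leb_spec a (S k)).
    + assert (a = S k) by lia. subst a. rewrite Nat.sub_diag.
      replace (S k - k)%nat with 1%nat by lia.
      replace (S k + b - k)%nat with (S b) by lia. simpl T. simpl Cpow.
      rewrite <- Hvw. ring.
    + replace (a - k)%nat with (S (a - S k)) by lia. simpl T.
      replace (a + b - k)%nat with (S (a - S k + b)) by lia.
      rewrite !Cpow_add_r. simpl Cpow. rewrite (Cpow_add_r Q (a - S k) b). rewrite <- Hvw. ring.
Qed.

Lemma jtp v w (Hvw : v * w = Q) a b :
  qpoch (- v) Q a * qpoch (- w) Q b =
  csum (fun k => jc v w a k * qbin Q (a + b) k) (S (a + b)).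
Proof.
  induction b.
  - rewrite Nat.add_0_r. rewrite rothe_rev. simpl qpoch. rewrite Cmult_1_r.
    apply csum_ext. intros k Hk. unfold jc.
    destruct (Nat.leb_spec a k).
    + assert (k = a) by lia. subst. rewrite Nat.sub_diag. reflexivity.
    + reflexivity.
  - rewrite qpoch_S. rewrite Cmult_assoc. rewrite IHb.
    replace (a + S b)%nat with (S (a + b)) by lia.
    rewrite (csum_shift _ (S (a + b))).
    rewrite (csum_ext (fun k => jc v w a (S k) * qbin Q (S (a + b)) (S k)) (fun k => jc v w a (S k) * qbin Q (a + b) (S k) +
       jc v w a k * (w * Q ^ b) * qbin Q (a + b) k) (S (a + b))).
    2:{ intros k Hk. rewrite (pascal1 Q HQ). rewrite <- (jc_step v w a b k) by (auto; lia). ring. }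
    rewrite csum_plus.
    assert (H : jc v w a 0 * qbin Q (S (a + b)) 0 +
        csum (fun k => jc v w a (S k) * qbin Q (a + b) (S k)) (S (a + b)) =
        csum (fun k => jc v w a k * qbin Q (a + b) k) (S (a + b))).
    { rewrite (qbin_0 Q HQ). rewrite <- (qbin_0 Q HQ (a + b)).
      rewrite <- (csum_shift (fun k => jc v w a k * qbin Q (a + b) k) (S (a + b))).
      rewrite csum_last. rewrite (qbin_gt Q (a + b) (S (a + b))) by lia. ring. }
    rewrite Cplus_assoc, H.
    rewrite (csum_ext (fun k => jc v w a k * (w * Q ^ b) * qbin Q (a + b) k)
      (fun k => (w * Q ^ b) * (jc v w a k * qbin Q (a + b) k))) by (intros; ring).
    rewrite csum_mult_l. ring.
Qed.
End JTP.

Lemma Cmod_mul_pow_le x p k : (Cmod p <= 1)%R -> (Cmod (x * p ^ k) <= Cmod x)%R.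
Proof.
  intros H. rewrite Cmod_mult. pose proof (Cmod_pow_le1 p k H). pose proof (Cmod_ge_0 x).
  pose proof (Cmod_ge_0 (p ^ k)). nra.
Qed.

Lemma qpoch_nz' x p k n : (Cmod x < 1)%R -> (Cmod p < 1)%R -> qpoch (x * p ^ k) p n <> 0.
Proof. intros. apply qpoch_nz; [|lra]. pose proof (Cmod_mul_pow_le x p k). lra. Qed.

Lemma qpoch_nz'' x p k j n : (Cmod x < 1)%R -> (Cmod p < 1)%R -> qpoch (x * p ^ k * p ^ j) p n <> 0.
Proof. intros. apply qpoch_nz; [|lra]. pose proof (Cmod_mul_pow_le x p k).
  pose proof (Cmod_mul_pow_le (x * p ^ k) p j). lra. Qed.

Section Bailey.
Variables p a w : C.
Hypothesis Hp : (Cmod p < 1)%R.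
Hypothesis Ha : (Cmod (a * p) < 1)%R.
Hypothesis Hw : (Cmod w < 1)%R.

Definition dB k r := / (qpoch p p (k - r) * qpoch (a * p) p (k + r)).
Definition BP (al be : nat -> C) := forall n, be n = csum (fun r => al r * dB n r) (S n).
Definition cB n k := pis w (a * p) p k * (- 1) ^ k * p ^ (T k) / (qpoch p p (n - k) * qpoch w p n).
Definition fB r := pis w (a * p) p r * (- 1) ^ r * p ^ (T r) / qpoch w p r.
Definition alpha' (al : nat -> C) r := fB r * al r.
Definition beta' (be : nat -> C) n := csum (fun k => cB n k * be k) (S n).

Let nzp n : qpoch p p n <> 0.
Proof. apply qpoch_nz; lra. Qed.

Lemma key_term r N m : (m <= N)%nat ->
  cB (r + N) (r + m) * dB (r + m) r =
  (fB r / (qpoch (w * p ^ r) p N * qpoch p p N * qpoch (a * p) p (r + N + r))) *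
  vt p N (p ^ r) (a * p * p ^ r) w m.
Proof.
  intros Hm. unfold cB, dB, fB, vt.
  rewrite pis_add. rewrite T_add.
  rewrite (Cpow_add_r p (T r + T m) (r * m)), (Cpow_add_r p (T r) (T m)), (Cpow_mult_r p r m).
  rewrite (Cpow_add_r (-1) r m).
  replace (r + N - (r + m))%nat with (N - m)%nat by lia.
  replace (r + m - r)%nat with m by lia.
  rewrite (qpoch_add w p r N).
  replace (r + m + r)%nat with ((r + r) + m)%nat by lia.
  replace (r + N + r)%nat with ((r + r) + m + (N - m))%nat by lia.
  rewrite (qpoch_add (a * p) p (r + r + m) (N - m)).
  rewrite (qpoch_add (a * p) p (r + r) m).
  rewrite (qbin_le p N m) by lia.
  replace (p ^ r * (a * p * p ^ r) * p ^ m) with (a * p * p ^ (r + r) * p ^ m)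
    by (rewrite Cpow_add_r; ring).
  replace (a * p * p ^ (r + r + m)) with (a * p * p ^ (r + r) * p ^ m)
    by (rewrite (Cpow_add_r p (r + r) m); ring).
  replace ((- p ^ r) ^ m) with ((- 1) ^ m * (p ^ r) ^ m)
    by (rewrite <- Cpow_mult_l; f_equal; ring).
  assert (H1 : qpoch w p r <> 0) by (apply qpoch_nz; lra).
  assert (H2 : qpoch (w * p ^ r) p N <> 0) by (apply qpoch_nz'; auto).
  assert (H3 : qpoch (a * p) p (r + r) <> 0) by (apply qpoch_nz; lra).
  assert (H4 : qpoch (a * p * p ^ (r + r)) p m <> 0) by (apply qpoch_nz'; auto).
  assert (H5 : qpoch (a * p * p ^ (r + r) * p ^ m) p (N - m) <> 0)
    by (apply qpoch_nz''; auto).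
  pose proof (nzp N). pose proof (nzp m). pose proof (nzp (N - m)).
  field. repeat split; auto.
Qed.

Lemma key_sum r N :
  csum (fun m => cB (r + N) (r + m) * dB (r + m) r) (S N) = fB r * dB (r + N) r.
Proof.
  rewrite (csum_ext _ (fun m => (fB r / (qpoch (w * p ^ r) p N * qpoch p p N *
      qpoch (a * p) p (r + N + r))) * vt p N (p ^ r) (a * p * p ^ r) w m)).
  2:{ intros m Hm. apply key_term. lia. }
  rewrite csum_mult_l. rewrite (vander p Hp).
  unfold dB. replace (r + N - r)%nat with N by lia.
  replace (p ^ r * w) with (w * p ^ r) by ring.
  assert (H2 : qpoch (w * p ^ r) p N <> 0) by (apply qpoch_nz'; auto).
  assert (H3 : qpoch (a * p) p (r + N + r) <> 0) by (apply qpoch_nz; lra).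
  pose proof (nzp N).
  field. repeat split; auto.
Qed.

Theorem bailey_lemma al be : BP al be -> BP (alpha' al) (beta' be).
Proof.
  intros H n. unfold beta'.
  rewrite (csum_ext (fun k => cB n k * be k)
     (fun k => csum (fun r => cB n k * (al r * dB k r)) (S k))).
  2:{ intros k Hk. rewrite H. rewrite <- csum_mult_l. reflexivity. }
  rewrite csum_swap_tri.
  apply csum_ext. intros r Hr.
  rewrite (csum_ext _ (fun m => al r * (cB (r + (n - r)) (r + m) * dB (r + m) r))).
  2:{ intros m Hm. replace (r + (n - r))%nat with n by lia. ring. }
  rewrite csum_mult_l. rewrite key_sum. unfold alpha'.
  replace (r + (n - r))%nat with n by lia. ring.
Qed.

End Bailey.

Definition de (n : nat) : C := match n with O => 1 | _ => 0 end.

Lemma Cpow_neg1_S p m : (- p) ^ m = (- 1) ^ m * p ^ m.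
Proof. rewrite <- Cpow_mult_l. f_equal. ring. Qed.

Section Unit.
Variable p : C.
Hypothesis Hp : (Cmod p < 1)%R.

Definition al_u1 (r : nat) : C :=
  match r with O => 1 | _ => (- 1) ^ r * p ^ (T r) * (1 + p ^ r) end.

Let nzp n : qpoch p p n <> 0.
Proof. apply qpoch_nz; lra. Qed.

Lemma qpoch_minus_one_zero n : qpoch (- - 1) p (S n) = 0.
Proof. rewrite qpoch_shift. replace (1 - - - 1) with (RtoC 0) by ring. ring. Qed.

Lemma unit1 : BP p 1 al_u1 de.
Proof.
  intros n. destruct n as [|n'].
  - simpl. unfold dB. simpl. field. 
  - set (n := S n'). simpl de.
    assert (J := jtp p Hp (- p) (- 1) ltac:(ring) n (S n')).
    rewrite (qpoch_minus_one_zero n') in J. fold n in J. rewrite Cmult_0_r in J.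
    replace (n + n)%nat with (2 * n)%nat in J by lia.
    rewrite csum_fold_even in J.
    replace (2 * n)%nat with (n + n)%nat in J by lia.
    rewrite (csum_ext (fun r => al_u1 r * dB p 1 n r)
      (fun r => / qpoch p p (n + n) * (al_u1 r * qbin p (n + n) (n + r)))).
    2:{ intros r Hr. unfold dB. rewrite (qbin_le p) by lia.
        replace (n + n - (n + r))%nat with (n - r)%nat by lia.
        replace (1 * p) with p by ring. field. split; auto. }
    rewrite csum_mult_l. rewrite csum_shift.
    rewrite (csum_ext (fun k => al_u1 (S k) * qbin p (n + n) (n + S k))
      (fun r => jc p (- p) (- 1) n (n + S r) * qbin p (n + n) (n + S r) +
                jc p (- p) (- 1) n (n - S r) * qbin p (n + n) (n - S r))).
    2:{ intros r Hr. unfold jc.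
        destruct (Nat.leb_spec n (n + S r)); [|lia].
        destruct (Nat.leb_spec n (n - S r)); [lia|].
        replace (n + S r - n)%nat with (S r) by lia.
        replace (n - (n - S r))%nat with (S r) by lia.
        rewrite (qbin_sym p Hp (n + n) (n - S r)) by lia.
        replace (n + n - (n - S r))%nat with (n + S r)%nat by lia.
        rewrite Cpow_neg1_S. simpl al_u1. simpl T. simpl Cpow. rewrite !Cpow_add_r. ring. }
    unfold jc at 1 in J. rewrite Nat.leb_refl, Nat.sub_diag in J.
    simpl al_u1. simpl T in J. simpl Cpow in J.
    rewrite Nat.add_0_r. transitivity (/ qpoch p p (n + n) * 0). ring. f_equal. rewrite J. ring.
Qed.

Definition al_up (r : nat) : C := (- 1) ^ r * p ^ (T r) * (1 - p ^ (2 * r + 1)) / (1 - p).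

Lemma one_minus_p_nz : 1 - p <> 0.
Proof. pose proof (nzp 1). intro E. apply H. simpl. rewrite Cmult_1_r. rewrite <- E. ring. Qed.

Lemma unitp : BP p p al_up de.
Proof.
  pose proof one_minus_p_nz as Hp1.
  intros n. destruct n as [|n'].
  - simpl. unfold dB, al_up. simpl. field. auto.
  - set (n := S n'). simpl de.
    assert (J := jtp p Hp (- p) (- 1) ltac:(ring) (S n) (S n')).
    rewrite (qpoch_minus_one_zero n') in J. fold n in J. rewrite Cmult_0_r in J.
    replace (S n + n)%nat with (S (2 * n))%nat in J by lia.
    rewrite csum_fold_odd in J.
    replace (2 * n)%nat with (n + n)%nat in J by lia.
    rewrite (csum_ext (fun r => al_up r * dB p p n r)
      (fun r => (1 - p) / qpoch p p (S (n + n)) * (al_up r * qbin p (S (n + n)) (n - r)))).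
    2:{ intros r Hr. unfold dB. rewrite (qbin_le p) by lia.
        replace (S (n + n) - (n - r))%nat with (S (n + r))%nat by lia.
        rewrite (qpoch_shift p p (n + r)).
        assert (qpoch (p * p) p (n + r) <> 0) by (apply qpoch_nz; [|lra];
          rewrite Cmod_mult; pose proof (Cmod_ge_0 p); nra).
        field. repeat split; auto. }
    rewrite csum_mult_l.
    rewrite (csum_ext (fun r => al_up r * qbin p (S (n + n)) (n - r))
      (fun r => / (1 - p) * (jc p (- p) (- 1) (S n) (S n + r) * qbin p (S (n + n)) (S n + r) +
                jc p (- p) (- 1) (S n) (n - r) * qbin p (S (n + n)) (n - r)))).
    2:{ intros r Hr. unfold jc.
        destruct (Nat.leb_spec (S n) (S n + r)); [|lia].
        destruct (Nat.leb_spec (S n) (n - r)); [lia|].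
        replace (S n + r - S n)%nat with r by lia.
        replace (S n - (n - r))%nat with (S r) by lia.
        rewrite (qbin_sym p Hp (S (n + n)) (S n + r)) by lia.
        replace (S (n + n) - (S n + r))%nat with (n - r)%nat by lia.
        rewrite Cpow_neg1_S. unfold al_up. simpl T.
        replace (2 * r + 1)%nat with (S (r + r)) by lia. rewrite Cpow_add_r.
        simpl Cpow. rewrite Cpow_add_r. field. auto. }
    rewrite csum_mult_l. rewrite <- J. ring.
Qed.
End Unit.

Definition cv (u : nat -> C) (l : C) := forall eps : R, (0 < eps)%R ->
  exists N, forall n, (N <= n)%nat -> (Cmod (u n - l) < eps)%R.

Lemma cv_filterlim u l : cv u l -> filterlim u eventually (locally l).
Proof.
  intros H. apply (proj2 (@filterlim_locally_ball_norm C_AbsRing nat C_NormedModule eventually _ u l)). intros eps.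
  destruct (H eps (cond_pos eps)) as [N HN]. exists N. intros n Hn.
  unfold ball_norm. apply HN. lia.
Qed.

Lemma filterlim_cv u l : filterlim u eventually (locally l) -> cv u l.
Proof.
  intros H eps Heps. pose proof (proj1 (@filterlim_locally_ball_norm C_AbsRing nat C_NormedModule eventually _ u l) H) as H1. clear H. rename H1 into H.
  destruct (H (mkposreal eps Heps)) as [N HN]. exists N. intros n Hn.
  apply (HN n). lia.
Qed.

Lemma cv_ext u v l : (forall n, u n = v n) -> cv u l -> cv v l.
Proof. intros E H eps He. destruct (H eps He) as [N HN]. exists N. intros n Hn.
  rewrite <- E. auto. Qed.

Lemma cv_ext_ev u v l N0 : (forall n, (N0 <= n)%nat -> u n = v n) -> cv u l -> cv v l.
Proof. intros E H eps He. destruct (H eps He) as [N HN]. exists (max N N0). intros n Hn.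
  rewrite <- E by lia. apply HN; lia. Qed.

Lemma cv_const c : cv (fun _ => c) c.
Proof. intros eps He. exists O. intros. replace (c - c) with (RtoC 0) by ring.
  rewrite Cmod_0. auto. Qed.

Lemma Cmod_tri3 a b : (Cmod (a + b) <= Cmod a + Cmod b)%R.
Proof. apply Cmod_triangle. Qed.

Lemma cv_plus u v l m : cv u l -> cv v m -> cv (fun n => u n + v n) (l + m).
Proof.
  intros Hu Hv eps He.
  destruct (Hu (eps/2)%R ltac:(lra)) as [N1 H1]. destruct (Hv (eps/2)%R ltac:(lra)) as [N2 H2].
  exists (max N1 N2). intros n Hn.
  replace (u n + v n - (l + m)) with ((u n - l) + (v n - m)) by ring.
  eapply Rle_lt_trans. apply Cmod_triangle.
  specialize (H1 n ltac:(lia)). specialize (H2 n ltac:(lia)). lra.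
Qed.

Lemma cv_bounded u l : cv u l -> exists B, (0 < B)%R /\ forall n, (Cmod (u n) <= B)%R.
Proof.
  intros H. destruct (H 1%R ltac:(lra)) as [N HN].
  assert (exists B, (0 < B)%R /\ forall n, (n < N)%nat -> (Cmod (u n) <= B)%R) as [B [HB0 HB]].
  { clear HN. induction N.
    - exists 1%R. split. lra. intros; lia.
    - destruct IHN as [B [HB0 HB]]. exists (Rmax B (Cmod (u N))). split.
      + eapply Rlt_le_trans; [apply HB0|apply Rmax_l].
      + intros n Hn. destruct (Nat.eq_dec n N).
        * subst. apply Rmax_r.
        * eapply Rle_trans; [apply HB; lia|apply Rmax_l]. }
  exists (Rmax B (Cmod l + 1)). split.
  - eapply Rlt_le_trans; [apply HB0|apply Rmax_l].
  - intros n. destruct (le_lt_dec N n).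
    + specialize (HN n l0). eapply Rle_trans; [|apply Rmax_r].
      replace (u n) with ((u n - l) + l) by ring.
      eapply Rle_trans. apply Cmod_triangle. lra.
    + eapply Rle_trans; [apply HB; auto|apply Rmax_l].
Qed.

Lemma cv_mult u v l m : cv u l -> cv v m -> cv (fun n => u n * v n) (l * m).
Proof.
  intros Hu Hv eps He.
  destruct (cv_bounded u l Hu) as [B [HB0 HB]].
  set (e1 := (eps / (2 * (Cmod m + 1)))%R).
  set (e2 := (eps / (2 * B))%R).
  assert (Hm0 : (0 <= Cmod m)%R) by apply Cmod_ge_0.
  assert (He1 : (0 < e1)%R). { unfold e1. apply Rdiv_lt_0_compat; lra. }
  assert (He2 : (0 < e2)%R). { unfold e2. apply Rdiv_lt_0_compat; lra. }
  destruct (Hu e1 He1) as [N1 H1]. destruct (Hv e2 He2) as [N2 H2].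
  exists (max N1 N2). intros n Hn.
  replace (u n * v n - l * m) with (u n * (v n - m) + (u n - l) * m) by ring.
  eapply Rle_lt_trans. apply Cmod_triangle. rewrite !Cmod_mult.
  specialize (H1 n ltac:(lia)). specialize (H2 n ltac:(lia)). specialize (HB n).
  assert (A1 : (Cmod (u n) * Cmod (v n - m) <= B * e2)%R).
  { apply Rmult_le_compat; auto using Cmod_ge_0. lra. }
  assert (A2 : (Cmod (u n - l) * Cmod m <= e1 * (Cmod m + 1))%R).
  { apply Rmult_le_compat; auto using Cmod_ge_0; lra. }
  assert (E1 : (e1 * (Cmod m + 1) = eps / 2)%R) by (unfold e1; field; lra).
  assert (E2 : (B * e2 = eps / 2)%R) by (unfold e2; field; lra).
  assert (Cmod (u n - l) * Cmod m < e1 * (Cmod m + 1))%R.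
  { apply Rle_lt_trans with (e1 * Cmod m)%R. apply Rmult_le_compat_r; lra. nra. }
  lra.
Qed.

Lemma cv_scal c u l : cv u l -> cv (fun n => c * u n) (c * l).
Proof. intros H. apply (cv_mult (fun _ => c) u c l (cv_const c) H). Qed.

Lemma cv_opp u l : cv u l -> cv (fun n => - u n) (- l).
Proof. intros H. apply (cv_ext (fun n => (-1) * u n)). intros; ring.
  replace (- l) with ((-1) * l) by ring. apply cv_scal; auto. Qed.

Lemma cv_unique u l m : cv u l -> cv u m -> l = m.
Proof.
  intros H1 H2. destruct (Ceq_dec l m) as [E|NE]; auto. exfalso.
  assert (Hd : (0 < Cmod (l - m))%R).
  { apply Cmod_gt_0. intro E; apply NE. apply (f_equal (fun z => z + m)) in E.
    replace (l - m + m) with l in E by ring. rewrite E. ring. }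
  destruct (H1 (Cmod (l - m) / 2)%R ltac:(lra)) as [N1 A1].
  destruct (H2 (Cmod (l - m) / 2)%R ltac:(lra)) as [N2 A2].
  specialize (A1 (max N1 N2) ltac:(lia)). specialize (A2 (max N1 N2) ltac:(lia)).
  assert (Cmod (l - m) <= Cmod (u (max N1 N2) - m) + Cmod (u (max N1 N2) - l))%R.
  { replace (l - m) with ((u (max N1 N2) - m) - (u (max N1 N2) - l)) by ring.
    eapply Rle_trans. apply Cmod_triangle. rewrite Cmod_opp. lra. }
  lra.
Qed.

Lemma cv_inv u l : cv u l -> l <> 0 -> cv (fun n => / u n) (/ l).
Proof.
  intros H Hl eps He.
  assert (Hl0 : (0 < Cmod l)%R) by (apply Cmod_gt_0; auto).
  destruct (H (Cmod l / 2)%R ltac:(lra)) as [N1 A1].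
  set (e := (eps * Cmod l * Cmod l / 2)%R).
  assert (He' : (0 < e)%R) by (unfold e; apply Rdiv_lt_0_compat; [|lra];
    apply Rmult_lt_0_compat; [apply Rmult_lt_0_compat|]; lra).
  destruct (H e He') as [N2 A2].
  exists (max N1 N2). intros n Hn.
  specialize (A1 n ltac:(lia)). specialize (A2 n ltac:(lia)).
  assert (Hu : (Cmod l / 2 <= Cmod (u n))%R).
  { assert (Cmod l <= Cmod (u n) + Cmod (u n - l))%R.
    { replace l with (u n - (u n - l)) at 1 by ring. eapply Rle_trans. apply Cmod_triangle.
      rewrite Cmod_opp. lra. }
    lra. }
  assert (Hun : u n <> 0). { intro E. rewrite E, Cmod_0 in Hu. lra. }
  replace (/ u n - / l) with ((l - u n) / (u n * l)) by (field; auto).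
  rewrite Cmod_div by (apply Cmult_neq_0; auto). rewrite Cmod_mult.
  replace (l - u n) with (- (u n - l)) by ring. rewrite Cmod_opp.
  apply (Rmult_lt_reg_r (Cmod (u n) * Cmod l)). apply Rmult_lt_0_compat; lra.
  unfold Rdiv. rewrite Rmult_assoc, Rinv_l by (apply Rgt_not_eq; apply Rmult_lt_0_compat; lra).
  rewrite Rmult_1_r.
  apply Rlt_le_trans with e; auto. unfold e.
  assert (eps * (Cmod l / 2) * Cmod l <= eps * Cmod (u n) * Cmod l)%R.
  { apply Rmult_le_compat_r. lra. apply Rmult_le_compat_l; lra. }
  lra.
Qed.

Lemma cv_sub u l (phi : nat -> nat) :
  cv u l -> (forall K, exists N0, forall N, (N0 <= N)%nat -> (K <= phi N)%nat) ->
  cv (fun N => u (phi N)) l.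
Proof.
  intros H Hphi eps He. destruct (H eps He) as [K HK]. destruct (Hphi K) as [N0 HN0].
  exists N0. intros n Hn. apply HK. apply HN0. auto.
Qed.

Lemma cv_csum (f : nat -> nat -> C) g K :
  (forall k, (k < K)%nat -> cv (fun N => f N k) (g k)) ->
  cv (fun N => csum (f N) K) (csum g K).
Proof.
  induction K; intros H.
  - simpl. apply cv_const.
  - simpl. apply cv_plus. apply IHK. intros; apply H; lia. apply H; lia.
Qed.

Lemma cv_le_bound u l B N0 : cv u l -> (forall n, (N0 <= n)%nat -> (Cmod (u n) <= B)%R) ->
  (Cmod l <= B)%R.
Proof.
  intros H HB. apply Rnot_lt_le. intros Hlt.
  destruct (H (Cmod l - B)%R ltac:(lra)) as [N HN].
  specialize (HN (max N N0) ltac:(lia)). specialize (HB (max N N0) ltac:(lia)).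
  assert (Cmod l <= Cmod (u (max N N0)) + Cmod (u (max N N0) - l))%R.
  { replace l with (u (max N N0) - (u (max N N0) - l)) at 1 by ring. eapply Rle_trans.
    apply Cmod_triangle. rewrite Cmod_opp. lra. }
  lra.
Qed.

Lemma sum_n_csum (a : nat -> C) n : sum_n a n = csum a (S n).
Proof.
  induction n.
  - rewrite sum_O. simpl. ring.
  - rewrite sum_Sn. rewrite IHn. reflexivity.
Qed.

Lemma is_seriesC_cv a l : is_seriesC a l <-> cv (fun n => csum a n) l.
Proof.
  unfold is_seriesC, is_series. split; intros H.
  - apply filterlim_cv in H. intros eps He. destruct (H eps He) as [N HN].
    exists (S N). intros n Hn. destruct n; [lia|]. rewrite <- sum_n_csum. apply HN; lia.
  - apply cv_filterlim. intros eps He. destruct (H eps He) as [N HN].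
    exists N. intros n Hn. rewrite sum_n_csum. apply HN; lia.
Qed.

Fixpoint rsum (f : nat -> R) (n : nat) : R :=
  match n with O => 0%R | S m => (rsum f m + f m)%R end.

Lemma sum_n_rsum (a : nat -> R) n : sum_n a n = rsum a (S n).
Proof.
  induction n.
  - rewrite sum_O. simpl. ring.
  - rewrite sum_Sn. rewrite IHn. reflexivity.
Qed.

Lemma Cmod_csum_le f n : (Cmod (csum f n) <= rsum (fun k => Cmod (f k)) n)%R.
Proof.
  induction n; simpl. rewrite Cmod_0. lra.
  eapply Rle_trans. apply Cmod_triangle. lra.
Qed.

Lemma rsum_le f g n : (forall k, (k < n)%nat -> (f k <= g k)%R) -> (rsum f n <= rsum g n)%R.
Proof. induction n; simpl; intros H. lra. assert (f n <= g n)%R by (apply H; lia).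
  assert (rsum f n <= rsum g n)%R by (apply IHn; intros; apply H; lia). lra. Qed.

Lemma rsum_mono f m n : (forall k, (0 <= f k)%R) -> (m <= n)%nat -> (rsum f m <= rsum f n)%R.
Proof. intros H Hmn. induction Hmn. lra. simpl. specialize (H m0). lra. Qed.

Lemma csum_diff f K N : (K <= N)%nat ->
  (Cmod (csum f N - csum f K) <= rsum (fun k => Cmod (f k)) N - rsum (fun k => Cmod (f k)) K)%R.
Proof.
  intros H. induction H.
  - replace (csum f K - csum f K) with (RtoC 0) by ring. rewrite Cmod_0. lra.
  - simpl. replace (csum f m + f m - csum f K) with ((csum f m - csum f K) + f m) by ring.
    eapply Rle_trans. apply Cmod_triangle. lra.
Qed.

Lemma rsum_lim_le M SM n : (forall k, (0 <= M k)%R) -> is_series M SM -> (rsum M n <= SM)%R.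
Proof.
  intros H0 HS. apply Rnot_lt_le. intros Hlt.
  unfold is_series in HS.
  pose proof (proj1 (@filterlim_locally_ball_norm R_AbsRing nat R_NormedModule eventually _ (sum_n M) SM) HS) as H1.
  clear HS. rename H1 into HS.
  destruct (HS (mkposreal (rsum M n - SM) ltac:(lra))) as [N HN].
  specialize (HN (max N n) ltac:(lia)). unfold ball_norm in HN. simpl in HN.
  change (norm (minus (sum_n M (max N n)) SM)) with (Rabs (sum_n M (max N n) - SM)) in HN.
  rewrite sum_n_rsum in HN.
  assert (rsum M n <= rsum M (S (max N n)))%R by (apply rsum_mono; auto; lia).
  apply Rabs_def2 in HN. lra.
Qed.

Lemma rsum_tail M SM : is_series M SM -> forall eps, (0 < eps)%R ->
  exists K, forall n, (K <= n)%nat -> (SM - rsum M n < eps)%R.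
Proof.
  intros HS eps He. unfold is_series in HS.
  pose proof (proj1 (@filterlim_locally_ball_norm R_AbsRing nat R_NormedModule eventually _ (sum_n M) SM) HS) as H1.
  clear HS. rename H1 into HS.
  destruct (HS (mkposreal eps He)) as [N HN]. exists (S N). intros n Hn.
  destruct n; [lia|]. specialize (HN n ltac:(lia)). unfold ball_norm in HN. simpl in HN.
  change (norm (minus (sum_n M n) SM)) with (Rabs (sum_n M n - SM)) in HN.
  rewrite sum_n_rsum in HN. apply Rabs_def2 in HN. lra.
Qed.

Lemma geom_series c r : (0 <= r < 1)%R -> is_series (fun n => c * r ^ n)%R (c / (1 - r))%R.
Proof.
  intros H. assert (Hg := is_series_geom r ltac:(rewrite Rabs_right; lra)).
  apply (is_series_scal_l c) in Hg. unfold Rdiv. exact Hg.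
Qed.

Lemma ex_geom c r : (0 <= r < 1)%R -> ex_series (fun n => c * r ^ n)%R.
Proof. intros H. eexists. apply geom_series; auto. Qed.

Lemma rsum_diff_le F M K N : (K <= N)%nat -> (forall k, (k < N)%nat -> (F k <= M k)%R) ->
  (rsum F N - rsum F K <= rsum M N - rsum M K)%R.
Proof. intros HKN. induction HKN; intros H. lra. simpl.
  assert (rsum F m - rsum F K <= rsum M m - rsum M K)%R
  by (apply IHHKN; intros; apply H; lia). specialize (H m ltac:(lia)). lra. Qed.

Theorem tannery (f : nat -> nat -> C) (g : nat -> C) (M : nat -> R) SM :
  (forall k, (0 <= M k)%R) -> is_series M SM ->
  (forall N k, (k < N)%nat -> (Cmod (f N k) <= M k)%R) ->
  (forall k, cv (fun N => f N k) (g k)) ->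
  exists G, is_seriesC g G /\ cv (fun N => csum (f N) N) G.
Proof.
  intros HM0 HMS Hb Hcv.
  assert (Hg : forall k, (Cmod (g k) <= M k)%R).
  { intros k. apply (cv_le_bound (fun N => f N k) (g k) (M k) (S k)).
    all: try apply Hcv. all: intros; apply Hb; lia. }
  assert (Hex : ex_series (K := C_AbsRing) (V := C_CompleteNormedModule) g).
  { apply (ex_series_le g M); [intros n; apply Hg | eexists; eauto]. }
  destruct Hex as [G HG].
  assert (HGc : is_seriesC g G) by exact HG.
  exists G. split; auto.
  apply is_seriesC_cv in HGc.
  intros eps He.
  destruct (HGc (eps / 4)%R ltac:(lra)) as [K1 HK1].
  destruct (rsum_tail M SM HMS (eps / 4)%R ltac:(lra)) as [K2 HK2].
  set (K := max K1 K2).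
  destruct (cv_csum f g K (fun k _ => Hcv k) (eps / 4)%R ltac:(lra)) as [N1 HN1].
  exists (max N1 K). intros N HN.
  specialize (HN1 N ltac:(lia)). specialize (HK1 K ltac:(lia)). specialize (HK2 K ltac:(lia)).
  assert (D : (Cmod (csum (f N) N - csum (f N) K) <= SM - rsum M K)%R).
  { eapply Rle_trans. apply csum_diff. lia.
    assert (rsum (fun k => Cmod (f N k)) N - rsum (fun k => Cmod (f N k)) K <=
            rsum M N - rsum M K)%R.
    { apply rsum_diff_le. lia. intros; apply Hb; auto. }
    pose proof (rsum_lim_le M SM N HM0 HMS). lra. }
  replace (csum (f N) N - G) with ((csum (f N) N - csum (f N) K) + (csum (f N) K - csum g K)
     + (csum g K - G)) by ring.
  eapply Rle_lt_trans. apply Cmod_triangle.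
  eapply Rle_lt_trans. apply Rplus_le_compat_r. apply Cmod_triangle.
  lra.
Qed.

Lemma exp_mono a b : (a <= b)%R -> (exp a <= exp b)%R.
Proof. intros H. destruct (Rle_lt_or_eq_dec a b H). left; apply exp_increasing; auto.
  right; subst; auto. Qed.
Lemma rsum_geom r n : (0 <= r < 1)%R -> (rsum (fun k => r ^ k)%R n <= / (1 - r))%R.
Proof.
  intros H. assert (E : (rsum (fun k => r ^ k)%R n * (1 - r) = 1 - r ^ n)%R).
  { induction n; simpl. ring. rewrite Rmult_plus_distr_r, IHn. ring. }
  assert (0 <= r ^ n)%R by (apply pow_le; lra).
  apply (Rmult_le_reg_r (1 - r)). lra. rewrite E, Rinv_l by lra. lra.
Qed.

Lemma rsum_nonneg f n : (forall k, (0 <= f k)%R) -> (0 <= rsum f n)%R.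
Proof. intros H. induction n; simpl. lra. specialize (H n). lra. Qed.

Lemma qpoch_upper x Q : (Cmod Q < 1)%R ->
  exists B, (0 < B)%R /\ forall n, (Cmod (qpoch x Q n) <= B)%R.
Proof.
  intros HQ. set (q := Cmod Q). set (X := Cmod x).
  assert (Hq0 : (0 <= q)%R) by apply Cmod_ge_0. assert (HX0 : (0 <= X)%R) by apply Cmod_ge_0.
  exists (exp (X / (1 - q))). split. apply exp_pos.
  intros n.
  assert (H : (Cmod (qpoch x Q n) <= exp (X * rsum (fun k => q ^ k)%R n))%R).
  { induction n.
    - simpl. rewrite Cmod_1, Rmult_0_r, exp_0. lra.
    - rewrite qpoch_S, Cmod_mult. simpl rsum. rewrite Rmult_plus_distr_l, exp_plus.
      apply Rmult_le_compat; auto using Cmod_ge_0.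
      eapply Rle_trans. apply Cmod_triangle. rewrite Cmod_opp, Cmod_1, Cmod_mult, Cmod_pow.
      fold q X. eapply Rle_trans; [|apply exp_ineq1_le]. lra. }
  eapply Rle_trans. apply H. apply exp_mono.
  pose proof (rsum_geom q n ltac:(split; [lra|exact HQ])). unfold Rdiv.
  apply Rmult_le_compat_l; auto.
Qed.

Lemma Cmod_1_minus_ge z : (1 - Cmod z <= Cmod (1 - z))%R.
Proof.
  assert (Cmod 1 <= Cmod (1 - z) + Cmod z)%R.
  { replace (RtoC 1) with ((1 - z) + z) at 1 by ring. apply Cmod_triangle. }
  rewrite Cmod_1 in H. lra.
Qed.

Lemma qpoch_lower x Q : (Cmod x < 1)%R -> (Cmod Q < 1)%R ->
  exists c, (0 < c)%R /\ forall n, (c <= Cmod (qpoch x Q n))%R.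
Proof.
  intros Hx HQ. set (q := Cmod Q). set (X := Cmod x).
  assert (Hq0 : (0 <= q)%R) by apply Cmod_ge_0. assert (HX0 : (0 <= X)%R) by apply Cmod_ge_0.
  set (d := (X / (1 - X))%R).
  assert (HX1 : (X < 1)%R) by (unfold X; lra). assert (Hq1 : (q < 1)%R) by (unfold q; lra).
  assert (Hd : (0 <= d)%R) by (unfold d, Rdiv; apply Rmult_le_pos; [lra| left; apply Rinv_0_lt_compat; lra]).
  exists (exp (- (d / (1 - q)))). split. apply exp_pos.
  intros n.
  assert (H : (exp (- (d * rsum (fun k => q ^ k)%R n)) <= Cmod (qpoch x Q n))%R).
  { induction n.
    - simpl. rewrite Cmod_1, Rmult_0_r, Ropp_0, exp_0. lra.
    - rewrite qpoch_S, Cmod_mult. simpl rsum.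
      replace (- (d * (rsum (fun k => q ^ k)%R n + q ^ n)))%R with
        (- (d * rsum (fun k => q ^ k)%R n) + - (d * q ^ n))%R by ring.
      rewrite exp_plus.
      apply Rmult_le_compat; try (left; apply exp_pos); auto.
      eapply Rle_trans; [|apply Cmod_1_minus_ge]. rewrite Cmod_mult, Cmod_pow. fold q X.
      set (y := (q ^ n)%R).
      assert (Hy : (0 <= y <= 1)%R). { unfold y. split. apply pow_le; lra.
        rewrite <- (pow1 n). apply pow_incr. split; lra. }
      assert (E1 : (1 + d * y <= exp (d * y))%R) by apply exp_ineq1_le.
      assert (E2 : (1 <= (1 - X * y) * (1 + d * y))%R).
      { assert (HdX : (d * (1 - X) = X)%R) by (unfold d; field; lra).
        assert (A0 : (0 <= d * X * (1 - y))%R).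
        { apply Rmult_le_pos; [apply Rmult_le_pos|]; lra. }
        assert (A : (X <= d * (1 - X * y))%R) by nra.
        assert (B : (X * y <= d * (1 - X * y) * y)%R) by (apply Rmult_le_compat_r; lra).
        nra. }
      rewrite exp_Ropp.
      assert (0 < exp (d * y))%R by apply exp_pos.
      assert (0 < 1 - X * y)%R by nra.
      apply (Rmult_le_reg_r (exp (d * y))); auto.
      rewrite Rinv_l by lra. nra. }
  eapply Rle_trans; [|apply H]. apply exp_mono. apply Ropp_le_contravar.
  pose proof (rsum_geom q n ltac:(split; [lra|exact HQ])). unfold Rdiv.
  apply Rmult_le_compat_l; auto.
Qed.

Lemma cv_ge_bound u l c : cv u l -> (forall n, (c <= Cmod (u n))%R) -> (c <= Cmod l)%R.
Proof.
  intros H Hc. apply Rnot_lt_le. intros Hlt.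
  destruct (H (c - Cmod l)%R ltac:(lra)) as [N HN].
  specialize (HN N (le_n N)). specialize (Hc N).
  assert (Cmod (u N) <= Cmod l + Cmod (u N - l))%R.
  { replace (u N) with (l + (u N - l)) at 1 by ring. apply Cmod_triangle. }
  lra.
Qed.

Lemma qpoch_cv x Q : (Cmod Q < 1)%R -> exists P, cv (qpoch x Q) P.
Proof.
  intros HQ. destruct (qpoch_upper x Q HQ) as [B [HB0 HB]].
  set (d := fun n => qpoch x Q (S n) - qpoch x Q n).
  assert (Hex : ex_series (K := C_AbsRing) (V := C_CompleteNormedModule) d).
  { apply (ex_series_le d (fun n => (B * Cmod x) * Cmod Q ^ n)%R).
    - intros n. change (norm (d n)) with (Cmod (d n)). unfold d. rewrite qpoch_S.
      replace (qpoch x Q n * (1 - x * Q ^ n) - qpoch x Q n) with (- (qpoch x Q n * (x * Q ^ n)))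
        by ring. rewrite Cmod_opp, !Cmod_mult, Cmod_pow.
      rewrite Rmult_assoc. apply Rmult_le_compat_r; auto.
      apply Rmult_le_pos; [apply Cmod_ge_0|apply pow_le; apply Cmod_ge_0].
    - apply ex_geom. split. apply Cmod_ge_0. auto. }
  destruct Hex as [D HD].
  assert (HDc : is_seriesC d D) by exact HD.
  apply is_seriesC_cv in HDc.
  exists (1 + D). apply (cv_ext (fun n => 1 + csum d n)).
  - intros n. induction n. simpl. ring. rewrite csum_last, Cplus_assoc, IHn. unfold d. ring.
  - apply cv_plus. apply cv_const. auto.
Qed.

Lemma qpoch_lim_nz x Q P : (Cmod x < 1)%R -> (Cmod Q < 1)%R -> cv (qpoch x Q) P -> P <> 0.
Proof.
  intros Hx HQ H E. destruct (qpoch_lower x Q Hx HQ) as [c [Hc0 Hc]].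
  pose proof (cv_ge_bound _ _ c H Hc). rewrite E, Cmod_0 in H0. lra.
Qed.

Lemma qpoch_zero p n : qpoch 0 p n = 1.
Proof. induction n. reflexivity. rewrite qpoch_S, IHn. ring. Qed.

Lemma pis_zero s p k : pis 0 s p k = (- s) ^ k * p ^ (T k).
Proof. induction k. simpl. ring. simpl pis. rewrite IHk. simpl T. rewrite Cpow_add_r. simpl. ring. Qed.

Lemma pis_factor c x p k : pis c (c * x) p k = c ^ k * qpoch x p k.
Proof. induction k. simpl. ring. simpl pis. rewrite IHk, qpoch_S. simpl. ring. Qed.

Lemma neg1_sq r : (- 1) ^ r * (- 1) ^ r = 1.
Proof. rewrite <- Cpow_mult_l. replace (-1 * -1) with (RtoC 1) by ring. apply Cpow_1_l. Qed.

Lemma beta_de p a w (Hp : (Cmod p < 1)%R) (Hw : (Cmod w < 1)%R) n :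
  beta' p a w de n = / (qpoch p p n * qpoch w p n).
Proof.
  unfold beta'. rewrite csum_shift. rewrite (csum_zero (fun k => cB p a w n (S k) * de (S k)) n) by (intros; simpl; ring).
  unfold cB. simpl. rewrite Nat.sub_0_r. field. split; apply qpoch_nz; lra.
Qed.

Lemma cB_zero p a n k : cB p a 0 n k = (a * p) ^ k * p ^ (T k + T k) / qpoch p p (n - k).
Proof.
  unfold cB. rewrite pis_zero, qpoch_zero, Cpow_add_r. rewrite Cpow_neg1_S.
  replace (-1 * -1) with (RtoC 1) by ring.
  unfold Cdiv. rewrite Cmult_1_r. pose proof (neg1_sq k). ring [H].
Qed.

Lemma fB_zero p a r : fB p a 0 r = (a * p) ^ r * p ^ (T r + T r).
Proof.
  unfold fB. rewrite pis_zero, qpoch_zero, Cpow_add_r. rewrite Cpow_neg1_S.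
  unfold Cdiv. pose proof (neg1_sq r). replace (/ 1) with (RtoC 1) by field. ring [H].
Qed.

Section Conc.
Variables q p : C.
Hypothesis Hpq : p = q * q.
Hypothesis Hq : (Cmod q < 1)%R.

Lemma Hp : (Cmod p < 1)%R.
Proof. rewrite Hpq, Cmod_mult. pose proof (Cmod_ge_0 q). nra. Qed.

Lemma Cmod_mul_lt1 x y : (Cmod x < 1)%R -> (Cmod y < 1)%R -> (Cmod (x * y) < 1)%R.
Proof. intros. rewrite Cmod_mult. pose proof (Cmod_ge_0 x). pose proof (Cmod_ge_0 y). nra. Qed.

Lemma Cmod0_lt1 : (Cmod 0 < 1)%R.
Proof. rewrite Cmod_0. lra. Qed.

Lemma fB_q r : fB p 1 q r = q ^ r * (- 1) ^ r * p ^ (T r).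
Proof.
  unfold fB. replace (1 * p) with (q * q) by (rewrite Hpq; ring).
  rewrite pis_factor. assert (qpoch q p r <> 0) by (apply qpoch_nz; [auto|pose proof Hp; lra]).
  field. auto.
Qed.

Lemma fB_qp r : fB p p (q * p) r = (q * p) ^ r * (- 1) ^ r * p ^ (T r) * qpoch q p r / qpoch (q * p) p r.
Proof.
  unfold fB. replace (p * p) with ((q * p) * q) by (rewrite Hpq; ring).
  rewrite pis_factor. unfold Cdiv. ring.
Qed.

Definition W1 (r : nat) : C :=
  match r with O => 1 | _ => q ^ (5 * r) * (q ^ 12) ^ (T r) * (1 + q ^ (2 * r)) end.
Definition W2 (r : nat) : C := q ^ (11 * r) * (q ^ 12) ^ (T r) * (1 + q ^ (2 * r + 1)).

Lemma A1_explicit r :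
  alpha' p 1 0 (alpha' p 1 0 (alpha' p 1 q (al_u1 p))) r = W1 r.
Proof.
  unfold alpha'. rewrite !fB_zero, fB_q.
  destruct r as [|r'].
  - simpl. ring.
  - set (r := S r'). change (al_u1 p r) with ((- 1) ^ r * p ^ (T r) * (1 + p ^ r)).
    change (W1 r) with (q ^ (5 * r) * (q ^ 12) ^ (T r) * (1 + q ^ (2 * r))).
    pose proof (neg1_sq r) as Z.
    rewrite Hpq. replace (1 * (q * q)) with (q * q) by ring.
    rewrite !Cpow_mult_l, !Cpow_add_r.
    rewrite <- (Cpow_mult_r q 12 (T r)).
    rewrite (Nat.mul_comm 12 (T r)), (Nat.mul_comm 5 r), (Nat.mul_comm 2 r), !Cpow_mult_r.
    ring [Z].
Qed.

Lemma one_plus_q_nz : 1 + q <> 0.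
Proof. replace (1 + q) with (1 - - q) by ring. apply Cmod_lt1_neq. rewrite Cmod_opp. auto. Qed.

Lemma A2_explicit r :
  alpha' p p 0 (alpha' p p 0 (alpha' p p (q * p) (al_up p))) r = W2 r / (1 + q).
Proof.
  unfold alpha'. rewrite !fB_zero, fB_qp. unfold al_up, W2.
  pose proof (neg1_sq r) as Z.
  assert (H1 : qpoch q p (S r) = qpoch q p r * (1 - q * p ^ r)) by apply qpoch_S.
  rewrite qpoch_shift in H1.
  assert (Hqp : qpoch (q * p) p r <> 0) by (apply qpoch_nz; [apply Cmod_mul_lt1; [auto|apply Hp]|pose proof Hp; lra]).
  assert (Hqr : 1 - q * p ^ r <> 0).
  { apply Cmod_lt1_neq. pose proof (Cmod_mul_pow_le q p r). pose proof Hp. lra. }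
  assert (EB : qpoch q p r = (1 - q) * qpoch (q * p) p r / (1 - q * p ^ r)).
  { rewrite H1. field. auto. }
  rewrite EB.
  assert (Hp1 : 1 - p <> 0) by (apply Cmod_lt1_neq; apply Hp).
  pose proof one_plus_q_nz.
  transitivity ((- 1) ^ r * (- 1) ^ r * (q ^ (11 * r) * (q ^ 12) ^ T r * (1 + q ^ (2 * r + 1)) / (1 + q))).
  2:{ rewrite Z. ring. }
  assert (Hq1 : 1 - q <> 0) by (apply Cmod_lt1_neq; auto).
  revert Hqp Hqr Hp1. rewrite Hpq. intros Hqp Hqr Hp1.
  rewrite (Nat.mul_comm 11 r), (Nat.mul_comm 2 r).
  rewrite <- (Cpow_mult_r q 12 (T r)). rewrite (Nat.mul_comm 12 (T r)).
  rewrite !Cpow_add_r, !Cpow_mult_r, !Cpow_mult_l.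
  rewrite !Cpow_mult_l in Hqr.
  simpl Cpow.
  field. repeat split; auto.
  all: try (intro E; apply Hp1; rewrite <- E; ring).
Qed.
End Conc.

Definition aterm1 (q p : C) (i j : nat) : C :=
  q ^ (4 * i * i + 4 * i * j + 2 * j * j) / (qpoch q q (2 * i) * qpoch p p j).
Definition aterm2 (q p : C) (i j : nat) : C :=
  q ^ (4 * i * i + 4 * i * j + 2 * j * j + 4 * i + 2 * j) / (qpoch q q (2 * i + 1) * qpoch p p j).

Section Fin.
Variables q p : C.
Hypothesis Hpq : p = q * q.
Hypothesis Hq : (Cmod q < 1)%R.

Lemma qq_even i : qpoch q q (2 * i) = qpoch p p i * qpoch q p i.
Proof.
  induction i.
  - simpl. ring.
  - replace (2 * S i)%nat with (S (S (2 * i))) by lia.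
    rewrite !qpoch_S, IHi. rewrite Hpq.
    replace (2 * i)%nat with (i + i)%nat by lia.
    simpl Cpow. rewrite !Cpow_add_r, !Cpow_mult_l. ring.
Qed.

Lemma qq_odd i : qpoch q q (2 * i + 1) = qpoch p p i * ((1 - q) * qpoch (q * p) p i).
Proof.
  replace (2 * i + 1)%nat with (S (2 * i)) by lia. rewrite qpoch_S, qq_even.
  rewrite <- qpoch_shift. rewrite (qpoch_S q p i). rewrite Hpq.
  replace (2 * i)%nat with (i + i)%nat by lia. rewrite !Cpow_add_r, !Cpow_mult_l. ring.
Qed.

Lemma pow_id1 i m : (1 * p) ^ (i + m) * p ^ (T (i + m) + T (i + m)) * ((1 * p) ^ i * p ^ (T i + T i))
  = q ^ (4 * i * i + 4 * i * m + 2 * m * m).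
Proof.
  replace (1 * p) with p by ring. rewrite <- !Cpow_add_r. rewrite Hpq, Cpow_mult_l, <- Cpow_add_r.
  f_equal. pose proof (T_closed (i + m)). pose proof (T_closed i). nia.
Qed.

Lemma pow_id2 i m : (p * p) ^ (i + m) * p ^ (T (i + m) + T (i + m)) * ((p * p) ^ i * p ^ (T i + T i))
  = q ^ (4 * i * i + 4 * i * m + 2 * m * m + 4 * i + 2 * m).
Proof.
  rewrite !Cpow_mult_l. rewrite <- !Cpow_add_r. rewrite Hpq, Cpow_mult_l, <- Cpow_add_r.
  f_equal. pose proof (T_closed (i + m)). pose proof (T_closed i). nia.
Qed.

Let Hp' := Hp q p Hpq Hq.
Let nzp n : qpoch p p n <> 0.
Proof. apply qpoch_nz; lra. Qed.

Lemma triple_to_double (F : nat -> nat -> C) (b : nat -> C) N :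
  csum (fun n => F N n * csum (fun k => F n k * b k) (S n)) (S N) =
  csum (fun i => csum (fun m => F N (i + m)%nat * (F (i + m)%nat i * b i)) (S (N - i))) (S N).
Proof.
  rewrite (csum_ext _ (fun n => csum (fun k => F N n * (F n k * b k)) (S n))).
  2:{ intros n Hn. rewrite <- csum_mult_l. reflexivity. }
  apply (csum_swap_tri (fun n k => F N n * (F n k * b k)) N).
Qed.

Theorem finite_id1 N :
  csum (fun i => csum (fun j => aterm1 q p i j * / qpoch p p (N - (i + j))) (S (N - i))) (S N)
  = csum (fun r => W1 q r * dB p 1 N r) (S N).
Proof.
  assert (Ha : (Cmod (1 * p) < 1)%R) by (rewrite Cmult_1_l; auto).
  assert (BP1 := bailey_lemma p 1 0 Hp' Ha (Cmod0_lt1)  _ _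
                 (bailey_lemma p 1 0 Hp' Ha (Cmod0_lt1) _ _
                 (bailey_lemma p 1 q Hp' Ha Hq _ _ (unit1 p Hp')))).
  specialize (BP1 N).
  rewrite (csum_ext _ (fun r => W1 q r * dB p 1 N r)) in BP1.
  2:{ intros r Hr. rewrite (A1_explicit q p Hpq Hq). reflexivity. }
  rewrite <- BP1. unfold beta' at 1.
  unfold beta' at 1.
  rewrite (triple_to_double (cB p 1 0) (beta' p 1 q de) N).
  apply csum_ext. intros i Hi. apply csum_ext. intros m Hm.
  rewrite (beta_de p 1 q Hp' Hq). rewrite !cB_zero.
  unfold aterm1. rewrite qq_even. replace (i + m - i)%nat with m by lia.
  rewrite <- pow_id1.
  assert (qpoch q p i <> 0) by (apply qpoch_nz; lra).
  field. repeat split; auto.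
Qed.

Theorem finite_id2 N :
  csum (fun i => csum (fun j => (1 - q) * aterm2 q p i j * / qpoch p p (N - (i + j))) (S (N - i))) (S N)
  = csum (fun r => W2 q r / (1 + q) * dB p p N r) (S N).
Proof.
  assert (Ha : (Cmod (p * p) < 1)%R) by (apply Cmod_mul_lt1; auto).
  assert (Hw : (Cmod (q * p) < 1)%R) by (apply Cmod_mul_lt1; auto).
  assert (BP1 := bailey_lemma p p 0 Hp' Ha (Cmod0_lt1)  _ _
                 (bailey_lemma p p 0 Hp' Ha (Cmod0_lt1) _ _
                 (bailey_lemma p p (q * p) Hp' Ha Hw _ _ (unitp p Hp')))).
  specialize (BP1 N).
  rewrite (csum_ext _ (fun r => W2 q r / (1 + q) * dB p p N r)) in BP1.
  2:{ intros r Hr. rewrite (A2_explicit q p Hpq Hq). reflexivity. }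
  rewrite <- BP1. unfold beta' at 1.
  unfold beta' at 1.
  rewrite (triple_to_double (cB p p 0) (beta' p p (q * p) de) N).
  apply csum_ext. intros i Hi. apply csum_ext. intros m Hm.
  rewrite (beta_de p p (q * p) Hp' Hw). rewrite !cB_zero.
  unfold aterm2. rewrite qq_odd. replace (i + m - i)%nat with m by lia.
  rewrite <- pow_id2.
  assert (qpoch (q * p) p i <> 0) by (apply qpoch_nz; lra).
  assert (1 - q <> 0) by (apply Cmod_lt1_neq; auto).
  field. repeat split; auto.
Qed.
End Fin.

Section JF.
Variable q : C.
Hypothesis Hq : (Cmod q < 1)%R.
Let Q := q ^ 12.
Lemma HQ : (Cmod Q < 1)%R.
Proof. unfold Q. rewrite Cmod_pow. pose proof (Cmod_ge_0 q).
  apply pow_lt_1_compat. split; auto. lia. Qed.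

Theorem jf1 N :
  qpoch (- q ^ 5) (q ^ 12) N * qpoch (- q ^ 7) (q ^ 12) N =
  qbin (q ^ 12) (N + N) N + csum (fun r => W1 q (S r) * qbin (q ^ 12) (N + N) (N + S r)) N.
Proof.
  assert (J := jtp Q HQ (q ^ 5) (q ^ 7) ltac:(unfold Q; rewrite <- Cpow_add_r; reflexivity) N N).
  unfold Q in J. rewrite J.
  replace (N + N)%nat with (2 * N)%nat by lia.
  rewrite csum_fold_even.
  replace (2 * N)%nat with (N + N)%nat by lia.
  f_equal.
  - unfold jc. rewrite Nat.leb_refl, Nat.sub_diag. simpl. ring.
  - apply csum_ext. intros r Hr. unfold jc.
    destruct (Nat.leb_spec N (N + S r)); [|lia].
    destruct (Nat.leb_spec N (N - S r)); [lia|].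
    replace (N + S r - N)%nat with (S r) by lia.
    replace (N - (N - S r))%nat with (S r) by lia.
    rewrite (qbin_sym (q ^ 12) HQ (N + N) (N - S r)) by lia.
    replace (N + N - (N - S r))%nat with (N + S r)%nat by lia.
    unfold W1. set (m := S r).
    rewrite <- !Cpow_mult_r.
    replace (7 * m)%nat with (5 * m + 2 * m)%nat by lia. rewrite Cpow_add_r. ring.
Qed.

Theorem jf2 N :
  qpoch (- q) (q ^ 12) (S N) * qpoch (- q ^ 11) (q ^ 12) N =
  csum (fun r => W2 q r * qbin (q ^ 12) (S (N + N)) (N - r)) (S N).
Proof.
  assert (J := jtp Q HQ q (q ^ 11) ltac:(unfold Q; replace 12%nat with (1 + 11)%nat by lia;
     rewrite Cpow_add_r; simpl; ring) (S N) N).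
  unfold Q in J. rewrite J.
  replace (S N + N)%nat with (S (2 * N))%nat by lia.
  rewrite csum_fold_odd.
  replace (2 * N)%nat with (N + N)%nat by lia.
  apply csum_ext. intros r Hr. unfold jc.
  destruct (Nat.leb_spec (S N) (S N + r)); [|lia].
  destruct (Nat.leb_spec (S N) (N - r)); [lia|].
  replace (S N + r - S N)%nat with r by lia.
  replace (S N - (N - r))%nat with (S r) by lia.
  rewrite (qbin_sym (q ^ 12) HQ (S (N + N)) (S N + r)) by lia.
  replace (S (N + N) - (S N + r))%nat with (N - r)%nat by lia.
  unfold W2. simpl T.
  rewrite <- !Cpow_mult_r. rewrite !Cpow_add_r.
  replace (q ^ (12 * (T r + r))) with (q ^ (12 * T r) * q ^ (12 * r)) by (rewrite <- Cpow_add_r; f_equal; lia).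
  replace (q ^ S r) with (q * q ^ r) by reflexivity.
  replace (q ^ (12 * r)) with (q ^ (11 * r) * q ^ r) by (rewrite <- Cpow_add_r; f_equal; lia).
  replace (q ^ (2 * r)) with (q ^ r * q ^ r) by (rewrite <- Cpow_add_r; f_equal; lia).
  simpl Cpow. ring.
Qed.
End JF.

Lemma tannery_S (f : nat -> nat -> C) (g : nat -> C) (M : nat -> R) SM :
  (forall k, (0 <= M k)%R) -> is_series M SM ->
  (forall N k, (k <= N)%nat -> (Cmod (f N k) <= M k)%R) ->
  (forall k, cv (fun N => f N k) (g k)) ->
  exists G, is_seriesC g G /\ cv (fun N => csum (f N) (S N)) G.
Proof.
  intros HM0 HMS Hb Hcv.
  destruct (tannery (fun N k => f (pred N) k) g M SM HM0 HMS) as [G [HG HcvG]].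
  - intros N k Hk. apply Hb. lia.
  - intros k. apply (cv_sub (fun N => f N k) (g k) pred (Hcv k)).
    intros K. exists (S K). intros. lia.
  - exists G. split; auto.
    apply (cv_sub (fun N => csum (f (pred N)) N) G S HcvG). intros K. exists K. intros; lia.
Qed.

Lemma pow_le_mono x m n : (0 <= x <= 1)%R -> (m <= n)%nat -> (x ^ n <= x ^ m)%R.
Proof.
  intros Hx Hmn. replace n with (m + (n - m))%nat by lia. rewrite pow_add.
  assert (0 <= x ^ m)%R by (apply pow_le; lra).
  assert (x ^ (n - m) <= 1)%R by (rewrite <- (pow1 (n - m)); apply pow_incr; lra).
  assert (0 <= x ^ (n - m))%R by (apply pow_le; lra). nra.
Qed.

Lemma is_seriesC_unique a l m : is_seriesC a l -> is_seriesC a m -> l = m.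
Proof. intros H1 H2. apply is_seriesC_cv in H1, H2. eapply cv_unique; eauto. Qed.

Lemma is_seriesC_scal c a l : is_seriesC a l -> is_seriesC (fun n => a n * c) (l * c).
Proof.
  intros H. apply is_seriesC_cv in H. apply is_seriesC_cv.
  apply (cv_ext (fun n => c * csum a n)).
  - intros n. rewrite <- csum_mult_l. apply csum_ext. intros; ring.
  - replace (l * c) with (c * l) by ring. apply cv_scal. auto.
Qed.

Lemma ex_seriesC_bound (a : nat -> C) (M : nat -> R) :
  (forall n, (Cmod (a n) <= M n)%R) -> ex_series M -> exists l, is_seriesC a l.
Proof.
  intros Hb HM.
  assert (Hex : ex_series (K := C_AbsRing) (V := C_CompleteNormedModule) a).
  { apply (ex_series_le a M); auto. }
  destruct Hex as [l Hl]. exists l. exact Hl.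
Qed.

Lemma is_seriesC_le_bound a l (B : R) : is_seriesC a l ->
  (forall n, (rsum (fun k => Cmod (a k)) n <= B)%R) -> (Cmod l <= B)%R.
Proof.
  intros H Hb. apply is_seriesC_cv in H. apply (cv_le_bound _ _ B 0 H).
  intros n _. eapply Rle_trans. apply Cmod_csum_le. auto.
Qed.

Lemma rsum_geom_scal c x n : (0 <= c)%R -> (0 <= x < 1)%R ->
  (rsum (fun k => c * x ^ k)%R n <= c / (1 - x))%R.
Proof.
  intros Hc Hx. assert (E : rsum (fun k => c * x ^ k)%R n = (c * rsum (fun k => x ^ k)%R n)%R).
  { induction n; simpl. ring. rewrite IHn. ring. }
  rewrite E. unfold Rdiv. apply Rmult_le_compat_l; auto. apply rsum_geom; auto.
Qed.

Theorem double_tannery (a : nat -> nat -> C) (E : nat -> C) e Ce K x :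
  (0 <= x < 1)%R -> (0 <= K)%R -> (0 <= Ce)%R ->
  (forall i j, (Cmod (a i j) <= K * x ^ i * x ^ j)%R) ->
  (forall m, (Cmod (E m) <= Ce)%R) -> cv E e ->
  exists s Sm, (forall i, is_seriesC (a i) (s i)) /\ is_seriesC s Sm /\
   cv (fun N => csum (fun i => csum (fun j => a i j * E (N - (i + j))%nat) (S (N - i))) (S N)) (Sm * e).
Proof.
  intros Hx HK HCe Ha HE HEcv.
  assert (Hs : forall i, exists si, is_seriesC (a i) si).
  { intros i. apply (ex_seriesC_bound (a i) (fun j => (K * x ^ i) * x ^ j)%R).
    intros; apply Ha. apply ex_geom. auto. }
  assert (Hsb : forall i si, is_seriesC (a i) si -> (Cmod si <= K * x ^ i / (1 - x))%R).
  { intros i si Hsi. apply (is_seriesC_le_bound _ _ _ Hsi). intros n.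
    eapply Rle_trans; [apply rsum_le; intros; apply Ha|].
    apply rsum_geom_scal; auto. apply Rmult_le_pos; auto. apply pow_le; lra. }
  set (s := fun i => proj1_sig (constructive_indefinite_description _ (Hs i))).
  assert (Hsi : forall i, is_seriesC (a i) (s i)).
  { intros i. unfold s. destruct (constructive_indefinite_description _ (Hs i)). auto. }
  assert (HS : exists Sm, is_seriesC s Sm).
  { apply (ex_seriesC_bound s (fun i => (K / (1 - x)) * x ^ i)%R).
    intros i. specialize (Hsb i (s i) (Hsi i)). unfold Rdiv in *. lra.
    apply ex_geom. auto. }
  destruct HS as [Sm HS].
  exists s, Sm. split; auto. split; auto.
  assert (Hin : forall i, cv (fun N => csum (fun j => a i j * E (N - j)%nat) (S N)) (s i * e)).
  { intros i.
    destruct (tannery_S (fun N j => a i j * E (N - j)%nat) (fun j => a i j * e)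
        (fun j => (Ce * K * x ^ i) * x ^ j)%R (Ce * K * x ^ i / (1 - x))%R) as [G [HG HGcv]].
    - intros k. apply Rmult_le_pos. apply Rmult_le_pos. apply Rmult_le_pos; auto.
      apply pow_le; lra. apply pow_le; lra.
    - apply geom_series; auto.
    - intros N k _. rewrite Cmod_mult. specialize (Ha i k). specialize (HE (N - k)%nat).
      assert (0 <= Cmod (a i k))%R by apply Cmod_ge_0.
      assert (0 <= Cmod (E (N - k)%nat))%R by apply Cmod_ge_0.
      replace (Ce * K * x ^ i * x ^ k)%R with ((K * x ^ i * x ^ k) * Ce)%R by ring.
      apply Rmult_le_compat; auto.
    - intros k. apply (cv_ext (fun N => a i k * E (N - k)%nat)); [intros; reflexivity|].
      apply cv_scal. apply (cv_sub E e (fun N => N - k)%nat HEcv). intros K0. exists (K0 + k)%nat. intros; lia.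
    - assert (G = s i * e) by (apply (is_seriesC_unique (fun j => a i j * e)); auto;
        apply is_seriesC_scal; auto).
      subst G. auto. }
  destruct (tannery_S (fun N i => csum (fun j => a i j * E (N - (i + j))%nat) (S (N - i)))
     (fun i => s i * e) (fun i => (Ce * K / (1 - x)) * x ^ i)%R (Ce * K / (1 - x) / (1 - x))%R)
     as [H [HH HHcv]].
  - intros k. apply Rmult_le_pos. unfold Rdiv. apply Rmult_le_pos. apply Rmult_le_pos; auto.
    left; apply Rinv_0_lt_compat; lra. apply pow_le; lra.
  - apply geom_series; auto.
  - intros N i _. eapply Rle_trans. apply Cmod_csum_le.
    eapply Rle_trans. apply (rsum_le _ (fun j => (Ce * K * x ^ i) * x ^ j)%R).
    + intros j _. rewrite Cmod_mult. specialize (Ha i j). specialize (HE (N - (i + j))%nat).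
      assert (0 <= Cmod (a i j))%R by apply Cmod_ge_0.
      replace (Ce * K * x ^ i * x ^ j)%R with ((K * x ^ i * x ^ j) * Ce)%R by ring.
      apply Rmult_le_compat; auto. apply Cmod_ge_0.
    + eapply Rle_trans. apply rsum_geom_scal; auto.
      apply Rmult_le_pos. apply Rmult_le_pos; auto. apply pow_le; lra.
      right. unfold Rdiv. ring.
  - intros i. apply (cv_ext (fun N => csum (fun j => a i j * E (N - i - j)%nat) (S (N - i)))).
    + intros N. apply csum_ext. intros j _. f_equal. f_equal. lia.
    + apply (cv_sub (fun N => csum (fun j => a i j * E (N - j)%nat) (S N)) (s i * e)
         (fun N => N - i)%nat (Hin i)). intros K0. exists (K0 + i)%nat. intros; lia.
  - assert (H = Sm * e) by (apply (is_seriesC_unique (fun i => s i * e)); auto;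
        apply is_seriesC_scal; auto).
    subst H. auto.
Qed.

Lemma Cmod_inv_le v c : (0 < c)%R -> (c <= Cmod v)%R -> (Cmod (/ v) <= / c)%R.
Proof.
  intros Hc Hv. assert (v <> 0) by (intro E; rewrite E, Cmod_0 in Hv; lra).
  rewrite Cmod_inv by auto. apply Rinv_le_contravar; auto.
Qed.

Lemma Cmod_div_le u v w c1 c2 : (0 < c1)%R -> (0 < c2)%R -> (c1 <= Cmod v)%R -> (c2 <= Cmod w)%R ->
  (Cmod (u / (v * w)) <= Cmod u * (/ c1 * / c2))%R.
Proof.
  intros H1 H2 Hv Hw. unfold Cdiv.
  assert (v <> 0) by (intro E; rewrite E, Cmod_0 in Hv; lra).
  assert (w <> 0) by (intro E; rewrite E, Cmod_0 in Hw; lra).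
  replace (/ (v * w)) with (/ v * / w) by (field; auto).
  rewrite Cmod_mult, Cmod_mult.
  apply Rmult_le_compat_l. apply Cmod_ge_0.
  apply Rmult_le_compat; try (apply Cmod_ge_0); apply Cmod_inv_le; auto.
Qed.

Definition tends (phi : nat -> nat) := forall K, exists N0, forall N, (N0 <= N)%nat -> (K <= phi N)%nat.

Lemma qbin_cv Q P (phi1 phi2 : nat -> nat) : (Cmod Q < 1)%R -> cv (qpoch Q Q) P -> P <> 0 ->
  tends phi2 -> tends (fun N => phi1 N - phi2 N)%nat ->
  (exists N0, forall N, (N0 <= N)%nat -> (phi2 N <= phi1 N)%nat) ->
  cv (fun N => qbin Q (phi1 N) (phi2 N)) (/ P).
Proof.
  intros HQ HP HP0 T2 T12 [N0 HN0].
  apply (cv_ext_ev (fun N => qpoch Q Q (phi1 N) * / (qpoch Q Q (phi2 N) * qpoch Q Q (phi1 N - phi2 N)%nat)) _ _ N0).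
  - intros N HN. rewrite qbin_le by auto. reflexivity.
  - replace (/ P) with (P * / (P * P)) by (field; auto).
    apply cv_mult.
    + apply (cv_sub _ _ phi1 HP). intros K. destruct (T2 K) as [N1 H1]. exists (max N0 N1).
      intros N HN. specialize (H1 N ltac:(lia)). specialize (HN0 N ltac:(lia)). lia.
    + apply cv_inv. apply cv_mult; apply (cv_sub _ _ _ HP); auto. apply Cmult_neq_0; auto.
Qed.

Lemma qbin_bound Q : (Cmod Q < 1)%R -> exists B, (0 <= B)%R /\ forall n k, (Cmod (qbin Q n k) <= B)%R.
Proof.
  intros HQ. destruct (qpoch_upper Q Q HQ) as [B [HB0 HB]].
  destruct (qpoch_lower Q Q HQ HQ) as [c [Hc0 Hc]].
  exists (B * (/ c * / c))%R. split.
  - apply Rmult_le_pos. lra. apply Rmult_le_pos; left; apply Rinv_0_lt_compat; auto.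
  - intros n k. unfold qbin. destruct (k <=? n)%nat.
    + eapply Rle_trans. apply Cmod_div_le; eauto. apply Rmult_le_compat_r; auto.
      apply Rmult_le_pos; left; apply Rinv_0_lt_compat; auto.
    + rewrite Cmod_0. apply Rmult_le_pos. lra. apply Rmult_le_pos; left; apply Rinv_0_lt_compat; auto.
Qed.

Lemma inv_qpoch_bound x Q : (Cmod x < 1)%R -> (Cmod Q < 1)%R ->
  exists C0, (0 <= C0)%R /\ forall n, (Cmod (/ qpoch x Q n) <= C0)%R.
Proof.
  intros Hx HQ. destruct (qpoch_lower x Q Hx HQ) as [c [Hc0 Hc]].
  exists (/ c)%R. split. left; apply Rinv_0_lt_compat; auto.
  intros n. apply Cmod_inv_le; auto.
Qed.

Lemma series_shift a l : is_seriesC a l -> is_seriesC (fun n => a (S n)) (l - a 0%nat).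
Proof.
  intros H. apply is_seriesC_cv in H. apply is_seriesC_cv.
  apply (cv_ext (fun n => csum a (S n) - a 0%nat)).
  - intros n. rewrite csum_shift. ring.
  - apply cv_plus. apply (cv_sub _ _ S H). intros K; exists K; intros; lia. apply cv_const.
Qed.

Lemma abs_part (a : nat -> nat -> C) K x : (0 <= x < 1)%R -> (0 <= K)%R ->
  (forall i j, (Cmod (a i j) <= K * x ^ i * x ^ j)%R) ->
  exists t : nat -> R, (forall i, is_series (fun j => Cmod (a i j)) (t i)) /\ ex_series t.
Proof.
  intros Hx HK Ha.
  assert (Hex : forall i, ex_series (fun j => Cmod (a i j))).
  { intros i. apply (@ex_series_le R_AbsRing R_CompleteNormedModule _ (fun j => (K * x ^ i) * x ^ j)%R).
    - intros j. change (norm (Cmod (a i j))) with (Rabs (Cmod (a i j))).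
      rewrite Rabs_pos_eq by apply Cmod_ge_0. apply Ha.
    - apply ex_geom; auto. }
  exists (fun i => Series (fun j => Cmod (a i j))). split.
  - intros i. apply Series_correct. auto.
  - apply (@ex_series_le R_AbsRing R_CompleteNormedModule _ (fun i => (K / (1 - x)) * x ^ i)%R).
    + intros i. change (norm (Series (fun j => Cmod (a i j)))) with (Rabs (Series (fun j => Cmod (a i j)))).
      assert (H0 : (0 <= Series (fun j => Cmod (a i j)))%R).
      { pose proof (rsum_lim_le _ _ 0 (fun j => Cmod_ge_0 (a i j)) (Series_correct _ (Hex i))) as H0.
        simpl in H0. exact H0. }
      rewrite Rabs_pos_eq by auto.
      replace (K / (1 - x) * x ^ i)%R with ((K * x ^ i) / (1 - x))%R by (field; lra).
      rewrite <- (is_series_unique _ _ (geom_series (K * x ^ i) x Hx)).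
      apply Series_le. intros j. split. apply Cmod_ge_0. apply Ha. apply ex_geom; auto.
    + apply ex_geom; auto.
Qed.

Section Main.
Variable q : C.
Hypothesis Hq : (Cmod q < 1)%R.
Let x := Cmod q.
Let Hx : (0 <= x < 1)%R.
Proof. split. apply Cmod_ge_0. exact Hq. Qed.

Lemma Cmod_pow_le1' (z : C) n : (Cmod z <= 1)%R -> (Cmod z ^ n <= 1)%R.
Proof. intros. rewrite <- (pow1 n). apply pow_incr. split; auto. apply Cmod_ge_0. Qed.

Lemma pow_le1_R (y : R) n : (0 <= y <= 1)%R -> (y ^ n <= 1)%R.
Proof. intros. rewrite <- (pow1 n). apply pow_incr. auto. Qed.

Lemma B12 n : ((Cmod q ^ 12) ^ n <= 1)%R.
Proof. apply pow_le1_R. split. apply pow_le, Cmod_ge_0. apply pow_le1_R. split. apply Cmod_ge_0.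
  unfold x in Hx. lra. Qed.

Lemma W1_bound r : (Cmod (W1 q r) <= 2 * x ^ r)%R.
Proof.
  destruct r as [|r'].
  - simpl. rewrite Cmod_1. lra.
  - set (m := S r'). change (W1 q m) with (q ^ (5 * m) * (q ^ 12) ^ (T m) * (1 + q ^ (2 * m))).
    rewrite !Cmod_mult, !Cmod_pow.
    assert (A : (Cmod q ^ (5 * m) <= x ^ m)%R) by (apply pow_le_mono; [split; lra|lia]).
    assert (B : ((Cmod q ^ 12) ^ T m <= 1)%R) by apply B12.
    assert (Cc : (Cmod (1 + q ^ (2 * m)) <= 2)%R).
    { eapply Rle_trans. apply Cmod_triangle. rewrite Cmod_1. pose proof (Cmod_pow_le1 q (2 * m)).
      unfold x in Hx. assert (Cmod (q ^ (2 * m)) <= 1)%R by (apply H; lra). lra. }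
    assert (0 <= Cmod q ^ (5 * m))%R by (apply pow_le; apply Cmod_ge_0).
    assert (0 <= (Cmod q ^ 12) ^ T m)%R by (apply pow_le; apply pow_le; apply Cmod_ge_0).
    assert (0 <= Cmod (1 + q ^ (2 * m)))%R by apply Cmod_ge_0.
    assert (0 <= x ^ m)%R by (apply pow_le; lra).
    assert (Cmod q ^ (5 * m) * (Cmod q ^ 12) ^ T m <= x ^ m * 1)%R by (apply Rmult_le_compat; auto).
    nra.
Qed.

Lemma W2_bound r : (Cmod (W2 q r) <= 2 * x ^ r)%R.
Proof.
  unfold W2. rewrite !Cmod_mult, !Cmod_pow.
  assert (A : (Cmod q ^ (11 * r) <= x ^ r)%R) by (apply pow_le_mono; [split; lra|lia]).
  assert (B : ((Cmod q ^ 12) ^ T r <= 1)%R) by apply B12.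
  assert (Cc : (Cmod (1 + q ^ (2 * r + 1)) <= 2)%R).
  { eapply Rle_trans. apply Cmod_triangle. rewrite Cmod_1. pose proof (Cmod_pow_le1 q (2 * r + 1)).
    unfold x in Hx. assert (Cmod (q ^ (2 * r + 1)) <= 1)%R by (apply H; lra). lra. }
  assert (0 <= Cmod q ^ (11 * r))%R by (apply pow_le; apply Cmod_ge_0).
  assert (0 <= (Cmod q ^ 12) ^ T r)%R by (apply pow_le; apply pow_le; apply Cmod_ge_0).
  assert (0 <= Cmod (1 + q ^ (2 * r + 1)))%R by apply Cmod_ge_0.
  assert (0 <= x ^ r)%R by (apply pow_le; lra).
  assert (Cmod q ^ (11 * r) * (Cmod q ^ 12) ^ T r <= x ^ r * 1)%R by (apply Rmult_le_compat; auto).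
  nra.
Qed.

Lemma Hpq : q ^ 2 = q * q.
Proof. simpl. ring. Qed.
Lemma Hq2 : (Cmod (q ^ 2) < 1)%R.
Proof. rewrite Hpq. apply Cmod_mul_lt1; auto. Qed.
Lemma HQ12 : (Cmod (q ^ 12) < 1)%R.
Proof. rewrite Cmod_pow. apply pow_lt_1_compat. split. apply Cmod_ge_0. auto. lia. Qed.

Lemma aterm_pow_bound i j e : (i + j <= e)%nat -> (Cmod (q ^ e) <= x ^ i * x ^ j)%R.
Proof. intros H. rewrite Cmod_pow, <- pow_add. apply pow_le_mono; auto. split; lra. Qed.

Lemma tends_id_plus k : tends (fun N => N + k)%nat.
Proof. intros K. exists K. intros; lia. Qed.
Lemma tends_sub k : tends (fun N => N - k)%nat.
Proof. intros K. exists (K + k)%nat. intros; lia. Qed.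

Lemma theta_lim (W : nat -> C) (th : C) P3 :
  cv (qpoch (q ^ 12) (q ^ 12)) P3 -> P3 <> 0 ->
  (forall r, (Cmod (W r) <= 2 * x ^ r)%R) -> is_seriesC W th ->
  forall (phi1 phi2 : nat -> nat -> nat),
  (forall r, tends (phi2 r)) -> (forall r, tends (fun N => phi1 r N - phi2 r N)%nat) ->
  (forall r N, (r <= N)%nat -> (phi2 r N <= phi1 r N)%nat) ->
  cv (fun N => csum (fun r => W r * qbin (q ^ 12) (phi1 r N) (phi2 r N)) (S N)) (th * / P3).
Proof.
  intros H3 H30 HW Hth phi1 phi2 T2 T12 Hle.
  destruct (qbin_bound (q ^ 12) HQ12) as [Bq [HBq0 HBq]].
  destruct (tannery_S (fun N r => W r * qbin (q ^ 12) (phi1 r N) (phi2 r N)) (fun r => W r * / P3)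
     (fun r => (2 * Bq) * x ^ r)%R ((2 * Bq) / (1 - x))%R) as [G [HG HGcv]].
  - intros k. apply Rmult_le_pos. lra. apply pow_le; lra.
  - apply geom_series; auto.
  - intros N k Hk. rewrite Cmod_mult. specialize (HW k). specialize (HBq (phi1 k N) (phi2 k N)).
    assert (0 <= Cmod (W k))%R by apply Cmod_ge_0.
    assert (0 <= Cmod (qbin (q ^ 12) (phi1 k N) (phi2 k N)))%R by apply Cmod_ge_0.
    replace (2 * Bq * x ^ k)%R with ((2 * x ^ k) * Bq)%R by ring.
    apply Rmult_le_compat; auto.
  - intros k. apply cv_scal. apply (qbin_cv (q ^ 12) P3); auto. apply HQ12.
    exists k. intros; apply Hle; auto.
  - assert (G = th * / P3) by (apply (is_seriesC_unique (fun r => W r * / P3)); auto;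
      apply is_seriesC_scal; auto).
    subst G. auto.
Qed.

Lemma W_series (W : nat -> C) : (forall r, (Cmod (W r) <= 2 * x ^ r)%R) -> exists th, is_seriesC W th.
Proof. intros HW. apply (ex_seriesC_bound W (fun r => 2 * x ^ r)%R); auto. apply ex_geom; auto. Qed.

Theorem part1 :
  exists P1 P2 P3 P4 : C,
     is_qpoch_inf (- q ^ 5) (q ^ 12) P1 /\
     is_qpoch_inf (- q ^ 7) (q ^ 12) P2 /\
     is_qpoch_inf (q ^ 12) (q ^ 12) P3 /\
     is_qpoch_inf (q ^ 2) (q ^ 2) P4 /\
     is_double_seriesC
       (fun i j => q ^ (4 * i * i + 4 * i * j + 2 * j * j)
                   / (qpoch q q (2 * i) * qpoch (q ^ 2) (q ^ 2) j))
       (P1 * P2 * P3 / P4).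
Proof.
  destruct (qpoch_cv (- q ^ 5) (q ^ 12) HQ12) as [P1 H1].
  destruct (qpoch_cv (- q ^ 7) (q ^ 12) HQ12) as [P2 H2].
  destruct (qpoch_cv (q ^ 12) (q ^ 12) HQ12) as [P3 H3].
  destruct (qpoch_cv (q ^ 2) (q ^ 2) Hq2) as [P4 H4].
  assert (H30 : P3 <> 0) by (apply (qpoch_lim_nz _ _ _ HQ12 HQ12 H3)).
  assert (H40 : P4 <> 0) by (apply (qpoch_lim_nz _ _ _ Hq2 Hq2 H4)).
  exists P1, P2, P3, P4.
  split; [apply cv_filterlim; auto|]. split; [apply cv_filterlim; auto|].
  split; [apply cv_filterlim; auto|]. split; [apply cv_filterlim; auto|].
  destruct (qpoch_lower q q Hq Hq) as [c1 [Hc1 Hc1b]].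
  destruct (qpoch_lower (q ^ 2) (q ^ 2) Hq2 Hq2) as [c2 [Hc2 Hc2b]].
  set (K := (/ c1 * / c2)%R).
  assert (HK : (0 <= K)%R) by (unfold K; apply Rmult_le_pos; left; apply Rinv_0_lt_compat; auto).
  assert (Ha : forall i j, (Cmod (aterm1 q (q ^ 2) i j) <= K * x ^ i * x ^ j)%R).
  { intros i j. unfold aterm1. eapply Rle_trans. apply (Cmod_div_le _ _ _ c1 c2 Hc1 Hc2 (Hc1b _) (Hc2b _)).
    change (/ c1 * / c2)%R with K.
    replace (K * x ^ i * x ^ j)%R with ((x ^ i * x ^ j) * K)%R by ring.
    apply Rmult_le_compat_r; auto. apply aterm_pow_bound. nia. }
  destruct (inv_qpoch_bound (q ^ 2) (q ^ 2) Hq2 Hq2) as [Ce [HCe HCeb]].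
  assert (HE : cv (fun m => / qpoch (q ^ 2) (q ^ 2) m) (/ P4)) by (apply cv_inv; auto).
  destruct (double_tannery (aterm1 q (q ^ 2)) (fun m => / qpoch (q ^ 2) (q ^ 2) m) (/ P4) Ce K x
     Hx HK HCe Ha HCeb HE) as [s [S1 [Hs [HS HL]]]].
  destruct (W_series (W1 q) W1_bound) as [th1 Hth1].
  assert (HR : cv (fun N => csum (fun r => W1 q r * dB (q ^ 2) 1 N r) (S N)) (th1 * (/ P4 * / P4))).
  { destruct (tannery_S (fun N r => W1 q r * dB (q ^ 2) 1 N r) (fun r => W1 q r * (/ P4 * / P4))
       (fun r => (2 * (Ce * Ce)) * x ^ r)%R ((2 * (Ce * Ce)) / (1 - x))%R) as [G [HG HGcv]].
    - intros k. apply Rmult_le_pos. apply Rmult_le_pos. lra. apply Rmult_le_pos; auto. apply pow_le; lra.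
    - apply geom_series; auto.
    - intros N k Hk. unfold dB. rewrite Cmult_1_l.
      replace (/ (qpoch (q ^ 2) (q ^ 2) (N - k) * qpoch (q ^ 2) (q ^ 2) (N + k)))
        with (/ qpoch (q ^ 2) (q ^ 2) (N - k) * / qpoch (q ^ 2) (q ^ 2) (N + k))
        by (field; split; apply qpoch_nz; pose proof Hq2; lra).
      rewrite !Cmod_mult. specialize (HCeb (N - k)%nat) as A. specialize (HCeb (N + k)%nat) as B.
      pose proof (W1_bound k).
      assert (0 <= Cmod (W1 q k))%R by apply Cmod_ge_0.
      assert (0 <= Cmod (/ qpoch (q ^ 2) (q ^ 2) (N - k)))%R by apply Cmod_ge_0.
      assert (0 <= Cmod (/ qpoch (q ^ 2) (q ^ 2) (N + k)))%R by apply Cmod_ge_0.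
      replace (2 * (Ce * Ce) * x ^ k)%R with ((2 * x ^ k) * (Ce * Ce))%R by ring.
      apply Rmult_le_compat; auto. apply Rmult_le_pos; auto.
      apply Rmult_le_compat; auto.
    - intros k. apply (cv_ext (fun N => W1 q k * (/ qpoch (q ^ 2) (q ^ 2) (N - k) * / qpoch (q ^ 2) (q ^ 2) (N + k)))).
      + intros N. unfold dB. rewrite Cmult_1_l. f_equal. field. split; apply qpoch_nz; pose proof Hq2; lra.
      + apply cv_scal. apply cv_mult; apply (cv_sub _ _ _ HE); [apply tends_sub|apply tends_id_plus].
    - assert (G = th1 * (/ P4 * / P4)) by (apply (is_seriesC_unique (fun r => W1 q r * (/ P4 * / P4))); auto;
        apply is_seriesC_scal; auto).
      subst G. auto. }
  assert (EQ1 : S1 * / P4 = th1 * (/ P4 * / P4)).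
  { apply (cv_unique _ _ _ HL). apply (cv_ext _ _ _ (fun N => eq_sym (finite_id1 q (q ^ 2) Hpq Hq N)) HR). }
  assert (J : P1 * P2 = th1 * / P3).
  { apply (cv_unique (fun N => qpoch (- q ^ 5) (q ^ 12) N * qpoch (- q ^ 7) (q ^ 12) N)).
    apply cv_mult; auto.
    apply (cv_ext _ _ _ (fun N => eq_sym (jf1 q Hq N))).
    assert (Hth1' := series_shift _ _ Hth1).
    replace (th1 * / P3) with (/ P3 + (th1 - W1 q 0) * / P3) by (simpl; ring).
    apply cv_plus.
    - apply (qbin_cv (q ^ 12) P3 (fun N => N + N)%nat (fun N => N)); auto. apply HQ12.
      intros K0; exists K0; intros; lia. intros K0; exists K0; intros; lia. exists 0%nat; intros; lia.
    - destruct (qbin_bound (q ^ 12) HQ12) as [Bq [HBq0 HBq]].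
      destruct (tannery (fun N r => W1 q (S r) * qbin (q ^ 12) (N + N) (N + S r)) (fun r => W1 q (S r) * / P3)
        (fun r => (2 * Bq) * x ^ r)%R ((2 * Bq) / (1 - x))%R) as [G [HG HGcv]].
      + intros k. apply Rmult_le_pos. lra. apply pow_le; lra.
      + apply geom_series; auto.
      + intros N k Hk. rewrite Cmod_mult.
        pose proof (W1_bound (S k)). specialize (HBq (N + N)%nat (N + S k)%nat).
        assert (x ^ S k <= x ^ k)%R by (apply pow_le_mono; [split; lra|lia]).
        assert (0 <= Cmod (W1 q (S k)))%R by apply Cmod_ge_0.
        assert (0 <= Cmod (qbin (q ^ 12) (N + N) (N + S k)))%R by apply Cmod_ge_0.
        replace (2 * Bq * x ^ k)%R with ((2 * x ^ k) * Bq)%R by ring.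
        apply Rmult_le_compat; auto. lra.
      + intros k. apply cv_scal. apply (qbin_cv (q ^ 12) P3 (fun N => N + N)%nat (fun N => N + S k)%nat); auto.
        apply HQ12. apply tends_id_plus. intros K0; exists (K0 + S k)%nat; intros; lia.
        exists (S k); intros; lia.
      + assert (G = (th1 - W1 q 0) * / P3) by (apply (is_seriesC_unique (fun r => W1 q (S r) * / P3)); auto;
          apply is_seriesC_scal; auto).
        subst G. auto. }
  assert (HS1 : S1 = P1 * P2 * P3 / P4).
  { assert (E1 : S1 = th1 * / P4).
    { transitivity (S1 * / P4 * P4). field; auto. rewrite EQ1. field; auto. }
    assert (E2 : th1 = P1 * P2 * P3).
    { transitivity (th1 * / P3 * P3). field; auto. rewrite <- J. ring. }
    rewrite E1, E2. reflexivity. }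
  destruct (abs_part (aterm1 q (q ^ 2)) K x Hx HK Ha) as [t [Ht1 Ht2]].
  exists s. split; [exact Hs|]. split; [rewrite <- HS1; exact HS|]. exists t. split; [exact Ht1|exact Ht2].
Qed.
End Main.

Lemma is_seriesC_ext a b l : (forall n, a n = b n) -> is_seriesC a l -> is_seriesC b l.
Proof.
  intros E H. apply is_seriesC_cv in H. apply is_seriesC_cv.
  apply (cv_ext (fun n => csum a n)); auto. intros n. apply csum_ext. auto.
Qed.

Section Main2.
Variable q : C.
Hypothesis Hq : (Cmod q < 1)%R.
Let x := Cmod q.
Let Hx : (0 <= x < 1)%R.
Proof. split. apply Cmod_ge_0. exact Hq. Qed.

Theorem part2 :
  exists P1 P2 P3 P4 : C,
     is_qpoch_inf (- q) (q ^ 12) P1 /\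
     is_qpoch_inf (- q ^ 11) (q ^ 12) P2 /\
     is_qpoch_inf (q ^ 12) (q ^ 12) P3 /\
     is_qpoch_inf (q ^ 2) (q ^ 2) P4 /\
     is_double_seriesC
       (fun i j => q ^ (4 * i * i + 4 * i * j + 2 * j * j + 4 * i + 2 * j)
                   / (qpoch q q (2 * i + 1) * qpoch (q ^ 2) (q ^ 2) j))
       (P1 * P2 * P3 / P4).
Proof.
  pose proof (HQ12 q Hq) as HQ. pose proof (Hq2 q Hq) as Hp. pose proof (Hpq q) as Hpq.
  assert (Hpp : (Cmod (q ^ 2 * q ^ 2) < 1)%R) by (apply Cmod_mul_lt1; auto).
  destruct (qpoch_cv (- q) (q ^ 12) HQ) as [P1 H1].
  destruct (qpoch_cv (- q ^ 11) (q ^ 12) HQ) as [P2 H2].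
  destruct (qpoch_cv (q ^ 12) (q ^ 12) HQ) as [P3 H3].
  destruct (qpoch_cv (q ^ 2) (q ^ 2) Hp) as [P4 H4].
  destruct (qpoch_cv (q ^ 2 * q ^ 2) (q ^ 2) Hp) as [Pp Hpp'].
  assert (H30 : P3 <> 0) by (apply (qpoch_lim_nz _ _ _ HQ HQ H3)).
  assert (H40 : P4 <> 0) by (apply (qpoch_lim_nz _ _ _ Hp Hp H4)).
  assert (Hpp0 : Pp <> 0) by (apply (qpoch_lim_nz _ _ _ Hpp Hp Hpp')).
  assert (HPp : P4 = (1 - q ^ 2) * Pp).
  { apply (cv_unique (fun n => qpoch (q ^ 2) (q ^ 2) (S n))).
    apply (cv_sub _ _ S H4). intros K; exists K; intros; lia.
    apply (cv_ext (fun n => (1 - q ^ 2) * qpoch (q ^ 2 * q ^ 2) (q ^ 2) n)).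
    intros n. rewrite qpoch_shift. reflexivity. apply cv_scal. auto. }
  exists P1, P2, P3, P4.
  split; [apply cv_filterlim; auto|]. split; [apply cv_filterlim; auto|].
  split; [apply cv_filterlim; auto|]. split; [apply cv_filterlim; auto|].
  destruct (qpoch_lower q q Hq Hq) as [c1 [Hc1 Hc1b]].
  destruct (qpoch_lower (q ^ 2) (q ^ 2) Hp Hp) as [c2 [Hc2 Hc2b]].
  set (K := (/ c1 * / c2)%R).
  assert (HK : (0 <= K)%R) by (unfold K; apply Rmult_le_pos; left; apply Rinv_0_lt_compat; auto).
  assert (Ha : forall i j, (Cmod (aterm2 q (q ^ 2) i j) <= K * x ^ i * x ^ j)%R).
  { intros i j. unfold aterm2. eapply Rle_trans. apply (Cmod_div_le _ _ _ c1 c2 Hc1 Hc2 (Hc1b _) (Hc2b _)).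
    change (/ c1 * / c2)%R with K.
    replace (K * x ^ i * x ^ j)%R with ((x ^ i * x ^ j) * K)%R by ring.
    apply Rmult_le_compat_r; auto. apply aterm_pow_bound; auto. nia. }
  destruct (inv_qpoch_bound (q ^ 2) (q ^ 2) Hp Hp) as [Ce [HCe HCeb]].
  destruct (inv_qpoch_bound (q ^ 2 * q ^ 2) (q ^ 2) Hpp Hp) as [Cp [HCp HCpb]].
  assert (HE : cv (fun m => / qpoch (q ^ 2) (q ^ 2) m) (/ P4)) by (apply cv_inv; auto).
  assert (HEp : cv (fun m => / qpoch (q ^ 2 * q ^ 2) (q ^ 2) m) (/ Pp)) by (apply cv_inv; auto).
  destruct (double_tannery (aterm2 q (q ^ 2)) (fun m => (1 - q) * / qpoch (q ^ 2) (q ^ 2) m)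
     ((1 - q) * / P4) (Cmod (1 - q) * Ce) K x Hx HK) as [s [S2 [Hs [HS HL]]]].
  { apply Rmult_le_pos; auto. apply Cmod_ge_0. }
  { exact Ha. }
  { intros m. rewrite Cmod_mult. apply Rmult_le_compat_l. apply Cmod_ge_0. auto. }
  { apply cv_scal. auto. }
  destruct (W_series q Hq (W2 q) (W2_bound q Hq)) as [th2 Hth2].
  assert (H1q : (Cmod (/ (1 + q)) <= / (1 - x))%R).
  { apply Cmod_inv_le. lra. pose proof (Cmod_1_minus_ge (- q)). rewrite Cmod_opp in H.
    replace (1 - - q) with (1 + q) in H by ring. unfold x. lra. }
  set (cc := / (1 + q) * (/ P4 * / Pp)).
  assert (HR : cv (fun N => csum (fun r => W2 q r / (1 + q) * dB (q ^ 2) (q ^ 2) N r) (S N)) (th2 * cc)).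
  { destruct (tannery_S (fun N r => W2 q r / (1 + q) * dB (q ^ 2) (q ^ 2) N r) (fun r => W2 q r * cc)
       (fun r => (2 * / (1 - x) * (Ce * Cp)) * x ^ r)%R ((2 * / (1 - x) * (Ce * Cp)) / (1 - x))%R) as [G [HG HGcv]].
    - intros k. apply Rmult_le_pos. apply Rmult_le_pos. apply Rmult_le_pos. lra.
      left; apply Rinv_0_lt_compat; lra. apply Rmult_le_pos; auto. apply pow_le; lra.
    - apply geom_series; auto.
    - intros N k Hk. unfold dB.
      replace (W2 q k / (1 + q) * / (qpoch (q ^ 2) (q ^ 2) (N - k) * qpoch (q ^ 2 * q ^ 2) (q ^ 2) (N + k)))
        with (W2 q k * / (1 + q) * (/ qpoch (q ^ 2) (q ^ 2) (N - k) * / qpoch (q ^ 2 * q ^ 2) (q ^ 2) (N + k)))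
        by (field; repeat split; [apply qpoch_nz; lra|apply qpoch_nz; lra|apply (one_plus_q_nz q Hq)]).
      rewrite !Cmod_mult. specialize (HCeb (N - k)%nat) as A. specialize (HCpb (N + k)%nat) as B.
      pose proof (W2_bound q Hq k).
      assert (0 <= Cmod (W2 q k))%R by apply Cmod_ge_0.
      assert (0 <= Cmod (/ (1 + q)))%R by apply Cmod_ge_0.
      assert (0 <= Cmod (/ qpoch (q ^ 2) (q ^ 2) (N - k)))%R by apply Cmod_ge_0.
      assert (0 <= Cmod (/ qpoch (q ^ 2 * q ^ 2) (q ^ 2) (N + k)))%R by apply Cmod_ge_0.
      replace (2 * / (1 - x) * (Ce * Cp) * x ^ k)%R with ((2 * x ^ k) * / (1 - x) * (Ce * Cp))%R by ring.
      assert (X1 : (Cmod (W2 q k) * Cmod (/ (1 + q)) <= 2 * x ^ k * / (1 - x))%R)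
        by (apply Rmult_le_compat; auto).
      assert (X2 : (Cmod (/ qpoch (q ^ 2) (q ^ 2) (N - k)) * Cmod (/ qpoch (q ^ 2 * q ^ 2) (q ^ 2) (N + k)) <= Ce * Cp)%R)
        by (apply Rmult_le_compat; auto).
      apply Rmult_le_compat; auto; apply Rmult_le_pos; auto.
    - intros k. apply (cv_ext (fun N => W2 q k * (/ (1 + q) * (/ qpoch (q ^ 2) (q ^ 2) (N - k) * / qpoch (q ^ 2 * q ^ 2) (q ^ 2) (N + k))))).
      + intros N. unfold dB. field. repeat split; [apply qpoch_nz; lra|apply qpoch_nz; lra|apply (one_plus_q_nz q Hq)].
      + apply cv_scal. apply cv_scal. apply cv_mult; [apply (cv_sub _ _ _ HE)|apply (cv_sub _ _ _ HEp)];
          [apply tends_sub|apply tends_id_plus].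
    - assert (G = th2 * cc) by (apply (is_seriesC_unique (fun r => W2 q r * cc)); auto;
        apply is_seriesC_scal; auto).
      subst G. apply (cv_ext _ _ _ (fun N => eq_refl)) in HGcv. exact HGcv. }
  assert (EQ1 : S2 * ((1 - q) * / P4) = th2 * cc).
  { apply (cv_unique _ _ _ HL).
    apply (cv_ext (fun N => csum (fun r => W2 q r / (1 + q) * dB (q ^ 2) (q ^ 2) N r) (S N))); [|exact HR].
    intros N. rewrite <- (finite_id2 q (q ^ 2) Hpq Hq N).
    apply csum_ext; intros i _; apply csum_ext; intros j _; ring. }
  assert (J : P1 * P2 = th2 * / P3).
  { apply (cv_unique (fun N => qpoch (- q) (q ^ 12) (S N) * qpoch (- q ^ 11) (q ^ 12) N)).
    apply cv_mult; auto. apply (cv_sub _ _ S H1). intros K0; exists K0; intros; lia.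
    apply (cv_ext _ _ _ (fun N => eq_sym (jf2 q Hq N))).
    apply (theta_lim q Hq (W2 q) th2 P3 H3 H30 (W2_bound q Hq) Hth2
      (fun r N => S (N + N)) (fun r N => N - r)%nat).
    - intros r. apply tends_sub.
    - intros r K0. exists K0. intros; lia.
    - intros; lia. }
  assert (HS2 : S2 = P1 * P2 * P3 / P4).
  { assert (E2 : th2 = P1 * P2 * P3).
    { transitivity (th2 * / P3 * P3). field; auto. rewrite <- J. ring. }
    rewrite <- E2.
    assert (Hq1 : 1 - q <> 0) by (apply Cmod_lt1_neq; auto).
    pose proof (one_plus_q_nz q Hq) as Hq1'.
    transitivity (S2 * ((1 - q) * / P4) * (P4 / (1 - q))). field; auto.
    rewrite EQ1. unfold cc. rewrite HPp. rewrite Hpq. field. repeat split; auto.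
    rewrite Hpq in HPp. intro E. apply H40. rewrite HPp. rewrite E. ring. }
  destruct (abs_part (aterm2 q (q ^ 2)) K x Hx HK Ha) as [t [Ht1 Ht2]].
  exists s. split; [exact Hs|]. split; [rewrite <- HS2; exact HS|]. exists t. split; [exact Ht1|exact Ht2].
Qed.
End Main2.


Theorem theorem3p1 (q : C) (hq : (Cmod q < 1)%R) :
  (exists P1 P2 P3 P4 : C,
     is_qpoch_inf (- q ^ 5) (q ^ 12) P1 /\
     is_qpoch_inf (- q ^ 7) (q ^ 12) P2 /\
     is_qpoch_inf (q ^ 12) (q ^ 12) P3 /\
     is_qpoch_inf (q ^ 2) (q ^ 2) P4 /\
     is_double_seriesC
       (fun i j => q ^ (4 * i * i + 4 * i * j + 2 * j * j)
                   / (qpoch q q (2 * i) * qpoch (q ^ 2) (q ^ 2) j))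
       (P1 * P2 * P3 / P4)) /\
  (exists P1 P2 P3 P4 : C,
     is_qpoch_inf (- q) (q ^ 12) P1 /\
     is_qpoch_inf (- q ^ 11) (q ^ 12) P2 /\
     is_qpoch_inf (q ^ 12) (q ^ 12) P3 /\
     is_qpoch_inf (q ^ 2) (q ^ 2) P4 /\
     is_double_seriesC
       (fun i j => q ^ (4 * i * i + 4 * i * j + 2 * j * j + 4 * i + 2 * j)
                   / (qpoch q q (2 * i + 1) * qpoch (q ^ 2) (q ^ 2) j))
       (P1 * P2 * P3 / P4)).
Proof.
  split; [apply part1 | apply part2]; exact hq.
Qed.
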